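(* Let $E_1=(\bar S,\bar V_1,\bar I_1,0)$, with $\bar S,\bar V_1,\bar I_1>0$, be a single-strain ($I_1$)-infection equilibrium of the model. Let $\bar{\mathcal{R}}_2=\frac{1}{\alpha_2}\frac{\partial F_2}{\partial I_2}(\bar S,0)+\frac{k\bar V_1}{\alpha_2}$. Then $E_1$ is unstable if $\bar{\mathcal{R}}_2>1$ and locally asymptotically stable if $\bar{\mathcal{R}}_2<1$.
   Context: The model is $\dot S=\Lambda-F_1(S,I_1)-F_2(S,I_2)-\lambda S$, $\dot V_1=rS-(\mu+kI_2)V_1$, $\dot I_1=F_1(S,I_1)-\alpha_1I_1$, $\dot I_2=F_2(S,I_2)+kI_2V_1-\alpha_2I_2$ on $\mathbb{R}^4_+$. The constants $\Lambda,\mu,r,k,\gamma_1,\gamma_2>0$ and $v_1,v_2\ge0$; $\lambda=r+\mu$ and $\alpha_i=\gamma_i+v_i+\mu$. For $i=1,2$ the incidence functions satisfy: - (H1) $F_i(S,I_i)=I_if_i(S,I_i)$ with $F_i,f_i\in C^2(\mathbb{R}^2_+,\mathbb{R}_+)$ and $F_i(0,I_i)=F_i(S,0)=0$; - (H2) $\partial f_i/\partial S>0$ and $\partial f_i/\partial I_i\le0$; - (H3) $\lim_{I_i\to0^+}F_i(S,I_i)/I_i$ exists and is positive for $S>0$. *)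

(* Defs.v *)
From Stdlib Require Import Reals.
From Coquelicot Require Import Coquelicot.
Open Scope R_scope.

Definition d1 (F : R -> R -> R) (x y : R) : R := Derive (fun u => F u y) x.
Definition d2 (F : R -> R -> R) (x y : R) : R := Derive (fun v => F x v) y.

Definition C2_R2 (F : R -> R -> R) : Prop :=
  (forall x y, ex_derive (fun u => F u y) x /\ ex_derive (fun v => F x v) y) /\
  (forall x y, ex_derive (fun u => d1 F u y) x /\ ex_derive (fun v => d1 F x v) y /\
               ex_derive (fun u => d2 F u y) x /\ ex_derive (fun v => d2 F x v) y) /\
  (forall x y,
     continuous (fun p : R * R => F (fst p) (snd p)) (x, y) /\
     continuous (fun p : R * R => d1 F (fst p) (snd p)) (x, y) /\
     continuous (fun p : R * R => d2 F (fst p) (snd p)) (x, y) /\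
     continuous (fun p : R * R => d1 (d1 F) (fst p) (snd p)) (x, y) /\
     continuous (fun p : R * R => d2 (d1 F) (fst p) (snd p)) (x, y) /\
     continuous (fun p : R * R => d1 (d2 F) (fst p) (snd p)) (x, y) /\
     continuous (fun p : R * R => d2 (d2 F) (fst p) (snd p)) (x, y)).

Definition incidence_hyp (F f : R -> R -> R) : Prop :=
  C2_R2 F /\ C2_R2 f /\
  (forall S I, 0 <= S -> 0 <= I -> 0 <= F S I /\ 0 <= f S I) /\
  (forall S I, 0 <= S -> 0 <= I -> F S I = I * f S I) /\
  (forall I, 0 <= I -> F 0 I = 0) /\
  (forall S, 0 <= S -> F S 0 = 0) /\
  (forall S I, 0 <= S -> 0 <= I -> d1 f S I > 0 /\ d2 f S I <= 0) /\
  (forall S, 0 < S -> exists l, 0 < l /\ filterlim (fun I => F S I / I) (at_right 0) (locally l)).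

Record params := mkParams {
  Lam : R; mu : R; r : R; k : R; gam1 : R; gam2 : R; v1 : R; v2 : R }.

Definition params_ok (p : params) : Prop :=
  0 < Lam p /\ 0 < mu p /\ 0 < r p /\ 0 < k p /\ 0 < gam1 p /\ 0 < gam2 p /\
  0 <= v1 p /\ 0 <= v2 p.

Definition lam (p : params) : R := r p + mu p.
Definition alpha1 (p : params) : R := gam1 p + v1 p + mu p.
Definition alpha2 (p : params) : R := gam2 p + v2 p + mu p.

Record state := mkState { sS : R; sV : R; sI1 : R; sI2 : R }.

Definition nonneg_state (x : state) : Prop :=
  0 <= sS x /\ 0 <= sV x /\ 0 <= sI1 x /\ 0 <= sI2 x.

Definition field (p : params) (F1 F2 : R -> R -> R) (x : state) : state :=
  mkState
    (Lam p - F1 (sS x) (sI1 x) - F2 (sS x) (sI2 x) - lam p * sS x)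
    (r p * sS x - (mu p + k p * sI2 x) * sV x)
    (F1 (sS x) (sI1 x) - alpha1 p * sI1 x)
    (F2 (sS x) (sI2 x) + k p * sI2 x * sV x - alpha2 p * sI2 x).

Definition is_equilibrium (p : params) (F1 F2 : R -> R -> R) (x : state) : Prop :=
  field p F1 F2 x = mkState 0 0 0 0.

Definition dist4 (x y : state) : R :=
  Rmax (Rmax (Rabs (sS x - sS y)) (Rabs (sV x - sV y)))
       (Rmax (Rabs (sI1 x - sI1 y)) (Rabs (sI2 x - sI2 y))).

Definition is_solution (p : params) (F1 F2 : R -> R -> R) (X : R -> state) : Prop :=
  (forall t, 0 < t ->
     is_derive (fun s => sS (X s)) t (sS (field p F1 F2 (X t))) /\
     is_derive (fun s => sV (X s)) t (sV (field p F1 F2 (X t))) /\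
     is_derive (fun s => sI1 (X s)) t (sI1 (field p F1 F2 (X t))) /\
     is_derive (fun s => sI2 (X s)) t (sI2 (field p F1 F2 (X t)))) /\
  filterlim (fun s => sS (X s)) (at_right 0) (locally (sS (X 0))) /\
  filterlim (fun s => sV (X s)) (at_right 0) (locally (sV (X 0))) /\
  filterlim (fun s => sI1 (X s)) (at_right 0) (locally (sI1 (X 0))) /\
  filterlim (fun s => sI2 (X s)) (at_right 0) (locally (sI2 (X 0))).

Definition lyap_stable (p : params) (F1 F2 : R -> R -> R) (E : state) : Prop :=
  forall eps, 0 < eps -> exists delta, 0 < delta /\
    forall X, is_solution p F1 F2 X -> nonneg_state (X 0) ->
      dist4 (X 0) E < delta -> forall t, 0 <= t -> dist4 (X t) E < eps.

Definition unstable (p : params) (F1 F2 : R -> R -> R) (E : state) : Prop :=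
  ~ lyap_stable p F1 F2 E.

Definition loc_asymp_stable (p : params) (F1 F2 : R -> R -> R) (E : state) : Prop :=
  lyap_stable p F1 F2 E /\
  exists delta0, 0 < delta0 /\
    forall X, is_solution p F1 F2 X -> nonneg_state (X 0) ->
      dist4 (X 0) E < delta0 ->
      is_lim (fun t => dist4 (X t) E) p_infty 0.

Definition Rbar2 (p : params) (F2 : R -> R -> R) (Sb Vb : R) : R :=
  / alpha2 p * d2 F2 Sb 0 + k p * Vb / alpha2 p.

(* Main.v *)
Require Import Defs.
From Stdlib Require Import Reals Lra Lia.
From Coquelicot Require Import Coquelicot.
Require Import Defs.
Open Scope R_scope.

Lemma ballR (x y e : R) : ball x e y <-> Rabs (y - x) < e.
Proof. reflexivity. Qed.

Lemma cont_R (f : R -> R) x :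
  continuous f x <-> forall e, 0 < e -> exists d, 0 < d /\
     forall y, Rabs (y - x) < d -> Rabs (f y - f x) < e.
Proof.
  split.
  - intros H e He. destruct (proj1 (filterlim_locally f (f x)) H (mkposreal e He)) as [d Hd].
    exists d. split. apply cond_pos. intros y Hy. apply (Hd y). exact Hy.
  - intros H. apply filterlim_locally. intros [e He].
    destruct (H e He) as [d [Hd Hy]]. exists (mkposreal d Hd). intros y Hy'. apply Hy. exact Hy'.
Qed.

Lemma cont_R2 (g : R -> R -> R) x y :
  continuous (fun p : R * R => g (fst p) (snd p)) (x, y) ->
  forall e, 0 < e -> exists d, 0 < d /\
     forall x' y', Rabs (x' - x) < d -> Rabs (y' - y) < d -> Rabs (g x' y' - g x y) < e.
Proof.
  intros H e He. destruct (proj1 (filterlim_locally _ (g x y)) H (mkposreal e He)) as [d Hd].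
  exists d. split. apply cond_pos. intros x' y' H1 H2. apply (Hd (x', y')). split; assumption.
Qed.

Lemma right_cont_eps (y : R -> R) a :
  filterlim y (at_right a) (locally (y a)) ->
  forall e, 0 < e -> exists d, 0 < d /\ forall t, a < t < a + d -> Rabs (y t - y a) < e.
Proof.
  intros H e He. destruct (proj1 (filterlim_locally _ _) H (mkposreal e He)) as [d Hd].
  exists d. split. apply cond_pos. intros t Ht. apply (Hd t). apply ballR. rewrite Rabs_right; simpl; lra.
  lra.
Qed.

Lemma cont_right (y : R -> R) a : continuous y a -> filterlim y (at_right a) (locally (y a)).
Proof.
  intros H. eapply filterlim_filter_le_1. 2: exact H. intros P [d Hd]. exists d. intros z Hz _. apply Hd; exact Hz.
Qed.

Lemma sup_approx (A : R -> Prop) m : is_lub A m -> forall d, 0 < d -> exists x, A x /\ m - d < x.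
Proof.
  intros [Hub Hlub] d Hd. apply Classical_Prop.NNPP. intros Hno.
  assert (m <= m - d). { apply Hlub. intros x Hx. destruct (Rle_or_lt x (m - d)). assumption.
    exfalso. apply Hno. exists x. split; assumption. }
  lra.
Qed.

Section Barrier.
Variables (y dy : R -> R).
Hypothesis Hd : forall t, 0 < t -> is_derive y t (dy t).
Hypothesis H0 : filterlim y (at_right 0) (locally (y 0)).

Lemma cont_pos t : 0 < t -> continuous y t.
Proof. intros Ht. apply (ex_derive_continuous (K:=R_AbsRing) (V:=R_NormedModule)). exists (dy t). apply Hd; exact Ht. Qed.

Lemma rcont_nonneg a : 0 <= a -> filterlim y (at_right a) (locally (y a)).
Proof.
  intros Ha. destruct (Req_dec a 0) as [->|Hne]. exact H0.
  apply cont_right, cont_pos. lra.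
Qed.

Lemma nonincr_pos a b : 0 < a < b -> (forall t, a < t < b -> dy t <= 0) -> y b <= y a.
Proof.
  intros Hab Hn. destruct (MVT_cor2 y dy a b) as [c [Hc1 Hc2]]. lra.
  intros c Hc. apply is_derive_Reals, Hd. lra.
  assert (dy c <= 0) by (apply Hn; lra). nra.
Qed.

Lemma nonincr a b : 0 <= a < b -> (forall t, a < t < b -> dy t <= 0) -> y b <= y a.
Proof.
  intros Hab Hn. destruct (Rle_lt_or_eq_dec 0 a (proj1 Hab)) as [Ha|Ha].
  apply nonincr_pos; [lra|exact Hn].
  subst a. destruct (Rle_or_lt (y b) (y 0)) as [|Hc]. assumption. exfalso.
  destruct (right_cont_eps y 0 H0 (y b - y 0)) as [d [Hd0 Hdd]]. lra.
  set (a' := Rmin (d/2) (b/2)).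
  assert (Ha' : 0 < a' < b /\ a' < d).
  { unfold a'. split. split. apply Rmin_pos; lra. apply Rle_lt_trans with (b/2). apply Rmin_r. lra.
    apply Rle_lt_trans with (d/2). apply Rmin_l. lra. }
  assert (y b <= y a'). { apply nonincr_pos. lra. intros t Ht. apply Hn. lra. }
  specialize (Hdd a'). assert (Rabs (y a' - y 0) < y b - y 0) by (apply Hdd; lra).
  apply Rabs_def2 in H1. lra.
Qed.

Lemma upper_barrier c : y 0 <= c -> (forall t, 0 < t -> c < y t -> dy t <= 0) ->
  forall t, 0 <= t -> y t <= c.
Proof.
  intros Hy0 Hn t0 Ht0. destruct (Rle_or_lt (y t0) c) as [|Hgt]. assumption. exfalso.
  set (A := fun tau => 0 <= tau <= t0 /\ y tau <= c).
  assert (Hb : bound A). { exists t0. intros x [Hx _]. lra. }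
  assert (Hne : exists x, A x). { exists 0. split. lra. assumption. }
  destruct (completeness A Hb Hne) as [m Hm].
  pose proof Hm as [Hub Hlub].
  assert (Hm0 : 0 <= m) by (apply Hub; split; [lra|assumption]).
  assert (Hmt : m <= t0) by (apply Hlub; intros x [Hx _]; lra).
  assert (Hym : y m <= c).
  { destruct (Rle_lt_or_eq_dec 0 m Hm0) as [Hmp|Hm']; [|subst m; assumption].
    destruct (Rle_or_lt (y m) c) as [|Hc]. assumption. exfalso.
    destruct (proj1 (cont_R y m) (cont_pos m Hmp) (y m - c)) as [d [Hdp Hdd]]. lra.
    destruct (sup_approx A m Hm d Hdp) as [tau [[Ht1 Ht2] Ht3]].
    assert (tau <= m) by (apply Hub; split; assumption).
    assert (Rabs (y tau - y m) < y m - c) by (apply Hdd; rewrite Rabs_left1; lra).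
    apply Rabs_def2 in H1. lra. }
  assert (Hmt' : m < t0). { destruct (Rle_lt_or_eq_dec _ _ Hmt) as [| <-]. assumption. lra. }
  assert (Hgt' : forall t, m < t <= t0 -> c < y t).
  { intros t Ht. destruct (Rle_or_lt (y t) c) as [Hle|]; [|assumption].
    assert (t <= m) by (apply Hub; split; [lra|assumption]). lra. }
  assert (y t0 <= y m). { apply nonincr. lra. intros t Ht. apply Hn. lra. apply Hgt'. lra. }
  lra.
Qed.

Lemma first_exit d : y 0 < d -> (forall t, 0 < t -> y t < d -> dy t <= 0) ->
  forall t, 0 <= t -> y t <= y 0.
Proof.
  intros Hy0 Hn t0 Ht0.
  set (A := fun tau => 0 <= tau <= t0 /\ forall s, 0 <= s <= tau -> y s < d).
  assert (Hb : bound A). { exists t0. intros x [Hx _]. lra. }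
  assert (Hne : exists x, A x). { exists 0. split. lra. intros s Hs. replace s with 0 by lra. assumption. }
  destruct (completeness A Hb Hne) as [m Hm].
  pose proof Hm as [Hub Hlub].
  assert (Hm0 : 0 <= m) by (apply Hub; split; [lra|intros s Hs; replace s with 0 by lra; assumption]).
  assert (Hmt : m <= t0) by (apply Hlub; intros x [Hx _]; lra).
  assert (Hbel : forall s, 0 <= s < m -> y s < d).
  { intros s Hs. destruct (sup_approx A m Hm (m - s)) as [tau [[Ht1 Ht2] Ht3]]. lra.
    apply Ht2. lra. }
  assert (Hdec : forall s, 0 <= s < m -> y s <= y 0).
  { intros s Hs. destruct (Rle_lt_or_eq_dec 0 s (proj1 Hs)) as [Hsp|<-]; [|lra].
    apply nonincr. lra. intros t Ht. apply Hn. lra. apply Hbel. lra. }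
  assert (Hym : y m <= y 0).
  { destruct (Rle_lt_or_eq_dec 0 m Hm0) as [Hmp|Hm']; [|subst m; lra].
    apply nonincr. lra. intros t Ht. apply Hn. lra. apply Hbel. lra. }
  assert (Hall : forall s, 0 <= s <= m -> y s <= y 0).
  { intros s Hs. destruct (Rle_lt_or_eq_dec _ _ (proj2 Hs)) as [| ->]. apply Hdec; lra. assumption. }
  destruct (Rle_lt_or_eq_dec _ _ Hmt) as [Hlt|<-]; [|apply Hall; lra].
  exfalso.
  destruct (right_cont_eps y m (rcont_nonneg m Hm0) (d - y m)) as [e [He Hee]]. lra.
  set (m' := Rmin (m + e/2) t0).
  assert (Hm' : m < m' <= t0 /\ m' < m + e).
  { unfold m'. split. split. apply Rmin_glb_lt; lra. apply Rmin_r. apply Rle_lt_trans with (m + e/2). apply Rmin_l. lra. }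
  assert (A m').
  { split. lra. intros s Hs. destruct (Rle_or_lt s m).
    - assert (y s <= y 0) by (apply Hall; lra). lra.
    - assert (HH : Rabs (y s - y m) < d - y m) by (apply Hee; lra). apply Rabs_def2 in HH. lra. }
  assert (m' <= m) by (apply Hub; assumption). lra.
Qed.
End Barrier.

Lemma isd_plus (f g : R -> R) x df dg : is_derive f x df -> is_derive g x dg ->
  is_derive (fun t => f t + g t) x (df + dg).
Proof. intros H1 H2. exact (is_derive_plus f g x df dg H1 H2). Qed.
Lemma isd_minus (f g : R -> R) x df dg : is_derive f x df -> is_derive g x dg ->
  is_derive (fun t => f t - g t) x (df - dg).
Proof. intros H1 H2. exact (is_derive_minus f g x df dg H1 H2). Qed.
Lemma isd_mult (f g : R -> R) x df dg : is_derive f x df -> is_derive g x dg ->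
  is_derive (fun t => f t * g t) x (df * g x + f x * dg).
Proof. intros H1 H2. exact (is_derive_mult f g x df dg H1 H2 (fun _ _ => Rmult_comm _ _)). Qed.
Lemma isd_const (c x : R) : is_derive (fun _ => c) x 0.
Proof. exact (is_derive_const c x). Qed.
Lemma isd_id (x : R) : is_derive (fun t => t) x 1.
Proof. exact (is_derive_id x). Qed.
Lemma isd_scal (f : R -> R) x k df : is_derive f x df -> is_derive (fun t => k * f t) x (k * df).
Proof. apply is_derive_scal. Qed.
Lemma isd_ext (f g : R -> R) x l l' : (forall t, f t = g t) -> l = l' -> is_derive f x l -> is_derive g x l'.
Proof. intros H <- Hd. eapply is_derive_ext; [exact H|exact Hd]. Qed.

Lemma cont_plusR (f g : R -> R) x : continuous f x -> continuous g x -> continuous (fun t => f t + g t) x.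
Proof. intros; apply (continuous_plus f g x); assumption. Qed.

Lemma cont_minusR (f g : R -> R) x : continuous f x -> continuous g x -> continuous (fun t => f t - g t) x.
Proof. intros; apply (continuous_minus f g x); assumption. Qed.
Lemma cont_multR (f g : R -> R) x : continuous f x -> continuous g x -> continuous (fun t => f t * g t) x.
Proof. intros; apply (continuous_mult f g x); assumption. Qed.

Lemma RInt_deriv (h : R -> R) : (forall u, continuous h u) -> forall t, is_derive (fun t => RInt h 0 t) t (h t).
Proof.
  intros Hc t. apply (is_derive_RInt h (fun t => RInt h 0 t) 0 t). apply filter_forall. intros b. apply (RInt_correct (V:=R_CompleteNormedModule)).
  apply (ex_RInt_continuous (V:=R_CompleteNormedModule)). intros z _. apply Hc. apply Hc.
Qed.

Lemma exRInt (h : R -> R) a b : (forall u, continuous h u) -> ex_RInt h a b.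
Proof. intros Hc. apply (ex_RInt_continuous (V:=R_CompleteNormedModule)). intros z _. apply Hc. Qed.

Inductive idx := i0 | i1 | i2 | i3.
Definition cp (k : idx) (x : state) : R :=
  match k with i0 => sS x | i1 => sV x | i2 => sI1 x | i3 => sI2 x end.
Definition mk4 (f : idx -> R) : state := mkState (f i0) (f i1) (f i2) (f i3).
Lemma cp_mk4 f k : cp k (mk4 f) = f k.
Proof. destruct k; reflexivity. Qed.
Lemma mk4_cp x : mk4 (fun k => cp k x) = x.
Proof. destruct x; reflexivity. Qed.

Lemma dist4_le x y e : (forall k, Rabs (cp k x - cp k y) <= e) -> dist4 x y <= e.
Proof.
  intros H. unfold dist4. repeat apply Rmax_lub.
  apply (H i0). apply (H i1). apply (H i2). apply (H i3).
Qed.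
Lemma dist4_ge x y k : Rabs (cp k x - cp k y) <= dist4 x y.
Proof.
  unfold dist4. destruct k; simpl.
  - eapply Rle_trans; [|apply Rmax_l]. apply Rmax_l.
  - eapply Rle_trans; [|apply Rmax_l]. apply Rmax_r.
  - eapply Rle_trans; [|apply Rmax_r]. apply Rmax_l.
  - eapply Rle_trans; [|apply Rmax_r]. apply Rmax_r.
Qed.
Lemma dist4_nonneg x y : 0 <= dist4 x y.
Proof. eapply Rle_trans; [apply Rabs_pos|apply (dist4_ge x y i0)]. Qed.

Lemma lim_le_abs (u v : nat -> R) (lu lv a : R) :
  is_lim_seq u lu -> is_lim_seq v lv -> (exists N, forall m, (N <= m)%nat -> Rabs (u m - a) <= v m) ->
  Rabs (lu - a) <= lv.
Proof.
  intros Hu Hv [N HN]. destruct (Rle_or_lt (Rabs (lu - a)) lv) as [|Hc]. assumption. exfalso.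
  set (e := (Rabs (lu - a) - lv) / 2). assert (He : 0 < e) by (unfold e; lra).
  apply is_lim_seq_spec in Hu. apply is_lim_seq_spec in Hv. unfold is_lim_seq' in Hu, Hv.
  destruct (Hu (mkposreal e He)) as [N1 H1]. destruct (Hv (mkposreal e He)) as [N2 H2].
  set (m := (N + N1 + N2)%nat).
  specialize (HN m ltac:(unfold m; lia)). specialize (H1 m ltac:(unfold m; lia)). specialize (H2 m ltac:(unfold m; lia)).
  simpl in H1, H2.
  assert (Rabs (lu - a) <= Rabs (u m - a) + Rabs (u m - lu)).
  { replace (lu - a) with ((u m - a) - (u m - lu)) by ring. eapply Rle_trans. apply Rabs_triang.
    rewrite Rabs_Ropp. lra. }
  apply Rabs_def2 in H2. unfold e in *. lra.
Qed.

Definition Eexp (y : R) (n : nat) : R := sum_n (fun j => y ^ j / INR (Factorial.fact j)) n.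

Lemma Eexp_lim y : is_lim_seq (Eexp y) (exp y).
Proof.
  pose proof (is_exp_Reals y) as H. unfold is_pseries, is_series in H.
  unfold is_lim_seq, Eexp.
  eapply filterlim_ext; [|exact H]. intros n. simpl. apply sum_n_ext. intros j.
  rewrite pow_n_pow. unfold scal; simpl. unfold mult; simpl. unfold Rdiv. ring.
Qed.

Lemma Eexp_S y n : Eexp y (S n) = Eexp y n + y ^ S n / INR (Factorial.fact (S n)).
Proof. unfold Eexp. rewrite sum_Sn. reflexivity. Qed.

Lemma fact_pos n : 0 < INR (Factorial.fact n).
Proof. apply lt_0_INR. apply Factorial.lt_O_fact. Qed.

Lemma Eexp_mono y n m : 0 <= y -> (n <= m)%nat -> Eexp y n <= Eexp y m.
Proof.
  intros Hy Hnm. induction Hnm. lra. rewrite Eexp_S.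
  assert (0 <= y ^ S m / INR (Factorial.fact (S m))). { apply Rdiv_le_0_compat. apply pow_le; lra. apply fact_pos. }
  lra.
Qed.

Lemma Eexp_le_exp y n : 0 <= y -> Eexp y n <= exp y.
Proof.
  intros Hy. pose proof (Eexp_lim y) as H.
  assert (Hc : is_lim_seq (fun _ : nat => Eexp y n) (Eexp y n)) by apply is_lim_seq_const.
  apply (is_lim_seq_incr_n _ n) in H.
  pose proof (is_lim_seq_le _ _ _ _ (fun m => Eexp_mono y n (m + n) Hy ltac:(lia)) Hc H). simpl in H0. exact H0.
Qed.

Lemma Eexp_cauchy y : forall e, 0 < e -> exists N, forall n m, (N <= n)%nat -> (N <= m)%nat ->
  Rabs (Eexp y m - Eexp y n) < e.
Proof.
  intros e He. pose proof (Eexp_lim y) as H. apply is_lim_seq_spec in H. unfold is_lim_seq' in H.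
  destruct (H (mkposreal (e/2) ltac:(lra))) as [N HN]. exists N. intros n m Hn Hm.
  pose proof (HN n Hn) as H1. pose proof (HN m Hm) as H2. simpl in H1, H2.
  apply Rabs_def2 in H1. apply Rabs_def2 in H2. apply Rabs_def1; lra.
Qed.

Definition zst := mkState 0 0 0 0.

Lemma lim_scal (u : nat -> R) (a l : R) : is_lim_seq u l -> is_lim_seq (fun n => a * u n) (a * l).
Proof. intros H. apply (is_lim_seq_scal_l u a l H). Qed.

Lemma Rmax0_lip s t : Rabs (Rmax 0 s - Rmax 0 t) <= Rabs (s - t).
Proof. unfold Rmax. destruct (Rle_dec 0 s); destruct (Rle_dec 0 t); split_Rabs; lra. Qed.


Section Picard.
Variable g : state -> state.
Variable L : R.
Hypothesis HL : 0 < L.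
Hypothesis Hlip : forall x y, dist4 (g x) (g y) <= L * dist4 x y.
Variable x0 : state.

Fixpoint pic (n : nat) (t : R) : state :=
  match n with
  | O => x0
  | S m => mk4 (fun k => cp k x0 + RInt (fun u => cp k (g (pic m u))) 0 t)
  end.

Lemma gcomp_bound x y k : Rabs (cp k (g x) - cp k (g y)) <= L * dist4 x y.
Proof. eapply Rle_trans. apply dist4_ge. apply Hlip. Qed.

Lemma cont_gcomp (Y : R -> state) t : (forall k, continuous (fun s => cp k (Y s)) t) ->
  forall k, continuous (fun s => cp k (g (Y s))) t.
Proof.
  intros Hc k. apply cont_R. intros e He.
  set (e' := e / (2 * L)). assert (He' : 0 < e') by (unfold e'; apply Rdiv_lt_0_compat; lra).
  destruct (proj1 (cont_R _ _) (Hc i0) e' He') as [d0 [Hd0 H0]].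
  destruct (proj1 (cont_R _ _) (Hc i1) e' He') as [d1 [Hd1 H1]].
  destruct (proj1 (cont_R _ _) (Hc i2) e' He') as [d2 [Hd2 H2]].
  destruct (proj1 (cont_R _ _) (Hc i3) e' He') as [d3 [Hd3 H3]].
  exists (Rmin (Rmin d0 d1) (Rmin d2 d3)). split.
  repeat apply Rmin_pos; assumption.
  intros y Hy.
  assert (Hm : forall a b c d, Rabs (y - t) < Rmin (Rmin a b) (Rmin c d) ->
     Rabs (y - t) < a /\ Rabs (y - t) < b /\ Rabs (y - t) < c /\ Rabs (y - t) < d).
  { intros a b c d H. repeat split; (eapply Rlt_le_trans; [exact H|]);
    unfold Rmin; repeat destruct Rle_dec; lra. }
  destruct (Hm _ _ _ _ Hy) as [Ha [Hb [Hc' Hd]]].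
  assert (dist4 (Y y) (Y t) <= e').
  { apply dist4_le. intros [ | | | ]; simpl; left. apply H0; assumption. apply H1; assumption.
    apply H2; assumption. apply H3; assumption. }
  eapply Rle_lt_trans. apply gcomp_bound.
  apply Rle_lt_trans with (L * e'). apply Rmult_le_compat_l; lra.
  unfold e'. field_simplify; lra.
Qed.

Lemma pic_cp n k t : cp k (pic (S n) t) = cp k x0 + RInt (fun u => cp k (g (pic n u))) 0 t.
Proof. simpl. apply cp_mk4. Qed.

Lemma pic_cont n : forall k t, continuous (fun s => cp k (pic n s)) t.
Proof.
  induction n; intros k t.
  - apply continuous_const.
  - eapply continuous_ext. intros s. symmetry. apply pic_cp.
    apply cont_plusR. apply continuous_const.
    apply (ex_derive_continuous (K:=R_AbsRing) (V:=R_NormedModule)).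
    eexists. apply RInt_deriv. intros u. apply cont_gcomp. intros k'. apply IHn.
Qed.

Definition M0 := dist4 (g x0) zst.
Definition C0 := M0 / L.
Definition bnd (n : nat) (t : R) := C0 * (L * t) ^ S n / INR (Factorial.fact (S n)).

Lemma M0_ge k : Rabs (cp k (g x0)) <= M0.
Proof. unfold M0. pose proof (dist4_ge (g x0) zst k). destruct k; simpl in *; rewrite Rminus_0_r in H; exact H. Qed.
Lemma C0_nonneg : 0 <= C0.
Proof. unfold C0, M0. apply Rdiv_le_0_compat. apply dist4_nonneg. exact HL. Qed.

Lemma RInt_bnd n t : 0 <= t -> RInt (fun u => L * bnd n u) 0 t = bnd (S n) t.
Proof.
  intros Ht. apply is_RInt_unique.
  replace (bnd (S n) t) with (minus (bnd (S n) t) (bnd (S n) 0)).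
  2:{ assert (H0 : bnd (S n) 0 = 0) by (unfold bnd; rewrite Rmult_0_r, pow_i by lia; unfold Rdiv; ring).
      rewrite H0. unfold minus, plus, opp; simpl. ring. }
  apply (is_RInt_derive (V:=R_CompleteNormedModule) (fun x => bnd (S n) x) (fun u => L * bnd n u)).
  - intros x _. unfold bnd.
    (eapply isd_ext with (f := fun x => (C0 / INR (Factorial.fact (S (S n)))) * ((L * x) ^ S (S n))));
    [intros; unfold Rdiv; ring | | apply isd_scal; apply is_derive_pow; apply isd_scal; apply isd_id].
    rewrite fact_simpl. rewrite mult_INR. simpl pred.
    assert (0 < INR (Factorial.fact (S n))) by apply fact_pos.
    assert (INR (S (S n)) <> 0) by (apply not_0_INR; lia).
    match goal with |- ?a = ?b => change (@eq R a b) end; field; split; lra.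
  - intros x _. unfold bnd. apply (ex_derive_continuous (K:=R_AbsRing) (V:=R_NormedModule)). auto_derive. auto.
Qed.

Lemma bnd_nonneg n t : 0 <= t -> 0 <= bnd n t.
Proof.
  intros Ht. unfold bnd. apply Rdiv_le_0_compat. apply Rmult_le_pos. apply C0_nonneg.
  apply pow_le. nra. apply fact_pos.
Qed.

Lemma pic_step n : forall t k, 0 <= t -> Rabs (cp k (pic (S n) t) - cp k (pic n t)) <= bnd n t.
Proof.
  induction n; intros t k Ht.
  - rewrite pic_cp. simpl pic. rewrite RInt_const.
    unfold scal; simpl; unfold mult; simpl.
    replace (cp k x0 + (t - 0) * cp k (g x0) - cp k x0) with (t * cp k (g x0)) by ring.
    rewrite Rabs_mult, (Rabs_right t) by lra. unfold bnd, C0. simpl.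
    replace (M0 / L * (L * t * 1) / 1) with (t * M0) by (field; lra).
    apply Rmult_le_compat_l. lra. apply M0_ge.
  - rewrite !pic_cp.
    replace (cp k x0 + RInt (fun u => cp k (g (pic (S n) u))) 0 t -
             (cp k x0 + RInt (fun u => cp k (g (pic n u))) 0 t))
      with (RInt (fun u => cp k (g (pic (S n) u)) - cp k (g (pic n u))) 0 t).
    2:{ rewrite (RInt_minus (V:=R_CompleteNormedModule)). unfold minus, plus, opp; simpl. ring.
        apply exRInt. intros u. apply cont_gcomp. intros; apply pic_cont.
        apply exRInt. intros u. apply cont_gcomp. intros; apply pic_cont. }
    assert (Hex : ex_RInt (fun u => cp k (g (pic (S n) u)) - cp k (g (pic n u))) 0 t).
    { apply exRInt. intros u. apply cont_minusR; apply cont_gcomp; intros; apply pic_cont. }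
    eapply Rle_trans. apply abs_RInt_le. lra. exact Hex.
    rewrite <- RInt_bnd by lra.
    apply RInt_le. lra.
    exact (ex_RInt_norm _ 0 t Hex).
    apply exRInt. intros u. unfold bnd. apply (ex_derive_continuous (K:=R_AbsRing) (V:=R_NormedModule)). auto_derive. auto.
    intros u Hu. eapply Rle_trans. apply gcomp_bound.
    apply Rmult_le_compat_l. lra. apply dist4_le. intros k'. apply IHn. lra.
Qed.

Lemma pic_cauchy n m t T k : 0 <= t <= T ->
  Rabs (cp k (pic (n + m) t) - cp k (pic n t)) <= C0 * (Eexp (L * T) (n + m) - Eexp (L * T) n).
Proof.
  intros Ht. induction m.
  - rewrite Nat.add_0_r. rewrite !Rminus_diag, Rabs_R0, Rmult_0_r. lra.
  - rewrite Nat.add_succ_r.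
    eapply Rle_trans. 
    replace (cp k (pic (S (n + m)) t) - cp k (pic n t)) with
      ((cp k (pic (S (n + m)) t) - cp k (pic (n + m) t)) + (cp k (pic (n + m) t) - cp k (pic n t))) by ring.
    apply Rabs_triang.
    rewrite Eexp_S.
    assert (bnd (n + m) t <= C0 * ((L * T) ^ S (n + m) / INR (Factorial.fact (S (n + m))))).
    { unfold bnd. unfold Rdiv. rewrite Rmult_assoc. apply Rmult_le_compat_l. apply C0_nonneg.
      apply Rmult_le_compat_r. left. apply Rinv_0_lt_compat, fact_pos.
      apply pow_incr. split; nra. }
    pose proof (pic_step (n + m) t k ltac:(lra)). lra.
Qed.

Definition Xf (k : idx) (t : R) : R := real (Lim_seq (fun n => cp k (pic n t))).

Lemma pic_cv k t : 0 <= t -> is_lim_seq (fun n => cp k (pic n t)) (Xf k t).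
Proof.
  intros Ht.
  assert (Hc : ex_lim_seq_cauchy (fun n => cp k (pic n t))).
  { intros [e He]. simpl.
    destruct (Eexp_cauchy (L * t) (e / (C0 + 1))) as [N HN].
    apply Rdiv_lt_0_compat. lra. pose proof C0_nonneg; lra.
    exists N. intros n m Hn Hm.
    assert (Hgen : forall a b, (N <= a)%nat -> (a <= b)%nat -> Rabs (cp k (pic b t) - cp k (pic a t)) < e).
    { intros a b Ha Hab. replace b with (a + (b - a))%nat by lia.
      eapply Rle_lt_trans. apply (pic_cauchy a (b - a) t t k). lra.
      pose proof (HN a (a + (b - a))%nat Ha ltac:(lia)).
      pose proof C0_nonneg.
      apply Rle_lt_trans with (C0 * Rabs (Eexp (L * t) (a + (b - a)) - Eexp (L * t) a)).
      apply Rmult_le_compat_l. assumption. apply Rle_abs.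
      apply Rle_lt_trans with (C0 * (e / (C0 + 1))). apply Rmult_le_compat_l. assumption. lra.
      apply Rlt_le_trans with ((C0 + 1) * (e / (C0 + 1))). apply Rmult_lt_compat_r.
      apply Rdiv_lt_0_compat; lra. lra. right. field. lra. }
    destruct (Compare_dec.le_ge_dec n m).
    - rewrite Rabs_minus_sym. apply Hgen; assumption.
    - apply Hgen. assumption. lia. }
  apply ex_lim_seq_cauchy_corr in Hc. destruct Hc as [l Hl].
  unfold Xf. rewrite (is_lim_seq_unique _ _ Hl). simpl. exact Hl.
Qed.

Lemma tail k n t T : 0 <= t <= T ->
  Rabs (Xf k t - cp k (pic n t)) <= C0 * (exp (L * T) - Eexp (L * T) n).
Proof.
  intros Ht. apply (lim_le_abs (fun m => cp k (pic m t)) (fun m => C0 * (Eexp (L * T) m - Eexp (L * T) n))).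
  apply pic_cv. lra.
  apply lim_scal. apply is_lim_seq_minus'. apply Eexp_lim. apply is_lim_seq_const.
  exists n. intros m Hm. replace m with (n + (m - n))%nat by lia. apply pic_cauchy. exact Ht.
Qed.

Definition Bk (T : R) := M0 + L * C0 * exp (L * T).

Lemma Bk_nonneg T : 0 <= Bk T.
Proof. unfold Bk. pose proof C0_nonneg. pose proof (exp_pos (L * T)). unfold M0. pose proof (dist4_nonneg (g x0) zst). assert (0 <= L * C0) by nra. pose proof (Rmult_le_pos _ _ H2 (Rlt_le _ _ H0)). lra. Qed.

Lemma pic_gbound n u T k : 0 <= u <= T -> Rabs (cp k (g (pic n u))) <= Bk T.
Proof.
  intros Hu. unfold Bk.
  replace (cp k (g (pic n u))) with (cp k (g x0) + (cp k (g (pic n u)) - cp k (g x0))) by ring.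
  eapply Rle_trans. apply Rabs_triang. apply Rplus_le_compat. apply M0_ge.
  eapply Rle_trans. apply gcomp_bound. rewrite Rmult_assoc. apply Rmult_le_compat_l. lra.
  apply dist4_le. intros k'.
  eapply Rle_trans. apply (pic_cauchy 0 n u T k' Hu). simpl.
  pose proof (Eexp_le_exp (L * T) n ltac:(nra)). pose proof C0_nonneg.
  assert (Eexp (L * T) 0 = 1). { unfold Eexp. rewrite sum_O. simpl. field. }
  nra.
Qed.

Lemma pic_lip_le n t t' T k : 0 <= t' <= t -> t <= T ->
  Rabs (cp k (pic n t) - cp k (pic n t')) <= Bk T * Rabs (t - t').
Proof.
  intros Ht Ht'. destruct n as [|n].
  - simpl. rewrite Rminus_diag, Rabs_R0. apply Rmult_le_pos. apply Bk_nonneg. apply Rabs_pos.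
  - rewrite !pic_cp.
    assert (Hex : forall a b, ex_RInt (fun u => cp k (g (pic n u))) a b).
    { intros a b. apply exRInt. intros u. apply cont_gcomp. intros; apply pic_cont. }
    assert (HC : RInt (fun u => cp k (g (pic n u))) 0 t' + RInt (fun u => cp k (g (pic n u))) t' t
                 = RInt (fun u => cp k (g (pic n u))) 0 t).
    { exact (RInt_Chasles (V:=R_CompleteNormedModule) _ 0 t' t (Hex _ _) (Hex _ _)). }
    rewrite <- HC.
    assert (E : forall a b c : R, c + (a + b) - (c + a) = b) by (intros; ring). rewrite E.
    rewrite (Rabs_right (t - t')) by lra. rewrite Rmult_comm.
    apply abs_RInt_le_const. lra. apply Hex. intros u Hu. apply pic_gbound. lra.
Qed.

Lemma pic_lip n t t' T k : 0 <= t <= T -> 0 <= t' <= T ->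
  Rabs (cp k (pic n t) - cp k (pic n t')) <= Bk T * Rabs (t - t').
Proof.
  intros Ht Ht'. destruct (Rle_dec t' t).
  - apply pic_lip_le; lra.
  - rewrite Rabs_minus_sym, (Rabs_minus_sym t). apply pic_lip_le; lra.
Qed.

Lemma Xf_lip k t t' T : 0 <= t <= T -> 0 <= t' <= T ->
  Rabs (Xf k t - Xf k t') <= Bk T * Rabs (t - t').
Proof.
  intros Ht Ht'. replace (Xf k t - Xf k t') with ((Xf k t - Xf k t') - 0) by ring.
  apply (lim_le_abs (fun m => cp k (pic m t) - cp k (pic m t')) (fun _ => Bk T * Rabs (t - t'))).
  apply is_lim_seq_minus'; apply pic_cv; lra. apply is_lim_seq_const.
  exists O. intros m _. rewrite Rminus_0_r. apply pic_lip; assumption.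
Qed.

Definition Xl (t : R) : state := mk4 (fun k => Xf k (Rmax 0 t)).

Lemma Xl_cont k t : continuous (fun s => cp k (Xl s)) t.
Proof.
  apply cont_R. intros e He. unfold Xl.
  set (T := Rabs t + 1). set (B := Bk T). assert (HB : 0 <= B) by apply Bk_nonneg.
  exists (Rmin 1 (e / (B + 1))). split. apply Rmin_pos. lra. apply Rdiv_lt_0_compat; lra.
  intros y Hy. rewrite !cp_mk4.
  assert (Hy1 : Rabs (y - t) < 1) by (eapply Rlt_le_trans; [exact Hy|apply Rmin_l]).
  assert (Hy2 : Rabs (y - t) < e / (B + 1)) by (eapply Rlt_le_trans; [exact Hy|apply Rmin_r]).
  eapply Rle_lt_trans. apply (Xf_lip k _ _ T).
  unfold T, Rmax. destruct (Rle_dec 0 y); split_Rabs; lra.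
  unfold T, Rmax. destruct (Rle_dec 0 t); split_Rabs; lra.
  apply Rle_lt_trans with (B * Rabs (y - t)). apply Rmult_le_compat_l. assumption. apply Rmax0_lip.
  apply Rle_lt_trans with (B * (e / (B + 1))). apply Rmult_le_compat_l. assumption. lra.
  apply Rlt_le_trans with ((B + 1) * (e / (B + 1))). apply Rmult_lt_compat_r.
  apply Rdiv_lt_0_compat; lra. lra. right. field. lra.
Qed.

Lemma Xl_cp k u : 0 <= u -> cp k (Xl u) = Xf k u.
Proof. intros Hu. unfold Xl. rewrite cp_mk4. rewrite Rmax_right by lra. reflexivity. Qed.

Lemma Xf_int k t : 0 <= t -> Xf k t = cp k x0 + RInt (fun u => cp k (g (Xl u))) 0 t.
Proof.
  intros Ht.
  assert (HexX : ex_RInt (fun u => cp k (g (Xl u))) 0 t).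
  { apply exRInt. intros u. apply cont_gcomp. intros; apply Xl_cont. }
  assert (H : Rabs (Xf k t - (cp k x0 + RInt (fun u => cp k (g (Xl u))) 0 t))
              <= t * (L * (C0 * (exp (L * t) - exp (L * t))))).
  { apply (lim_le_abs (fun n => cp k (pic (S n) t)) (fun n => t * (L * (C0 * (exp (L * t) - Eexp (L * t) n))))).
    - apply (is_lim_seq_incr_1 (fun n => cp k (pic n t))). apply pic_cv. lra.
    - apply lim_scal, lim_scal, lim_scal. apply is_lim_seq_minus'. apply is_lim_seq_const. apply Eexp_lim.
    - exists O. intros n _. rewrite pic_cp.
      assert (Hexn : ex_RInt (fun u => cp k (g (pic n u))) 0 t).
      { apply exRInt. intros u. apply cont_gcomp. intros; apply pic_cont. }
      assert (HM : RInt (fun u => cp k (g (pic n u)) - cp k (g (Xl u))) 0 t =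
                   RInt (fun u => cp k (g (pic n u))) 0 t - RInt (fun u => cp k (g (Xl u))) 0 t).
      { exact (RInt_minus (V:=R_CompleteNormedModule) _ _ 0 t Hexn HexX). }
      assert (E : forall a b c : R, c + a - (c + b) = a - b) by (intros; ring). rewrite E, <- HM.
      replace (t * (L * (C0 * (exp (L * t) - Eexp (L * t) n)))) with
        ((t - 0) * (L * (C0 * (exp (L * t) - Eexp (L * t) n)))) by ring.
      apply abs_RInt_le_const. lra.
      apply exRInt. intros u. apply cont_minusR; apply cont_gcomp; intros; [apply pic_cont|apply Xl_cont].
      intros u Hu. eapply Rle_trans. apply gcomp_bound. apply Rmult_le_compat_l. lra.
      apply dist4_le. intros k'. rewrite Xl_cp by lra. rewrite Rabs_minus_sym. apply tail. lra. }
  rewrite Rminus_diag, !Rmult_0_r in H.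
  pose proof (Rabs_pos (Xf k t - (cp k x0 + RInt (fun u => cp k (g (Xl u))) 0 t))).
  assert (Rabs (Xf k t - (cp k x0 + RInt (fun u => cp k (g (Xl u))) 0 t)) = 0) by lra.
  apply Rabs_eq_0 in H1. lra.
Qed.

Lemma picard_sol :
  Xl 0 = x0 /\
  (forall t, 0 < t -> forall k, is_derive (fun s => cp k (Xl s)) t (cp k (g (Xl t)))) /\
  (forall k t, continuous (fun s => cp k (Xl s)) t).
Proof.
  split; [|split].
  - unfold Xl. rewrite Rmax_left by lra.
    transitivity (mk4 (fun k => cp k x0)); [|apply mk4_cp].
    assert (Hz : forall k, Xf k 0 = cp k x0).
    { intros k. rewrite Xf_int by lra. rewrite RInt_point. unfold zero; simpl. ring. }
    unfold mk4. rewrite !Hz. reflexivity.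
  - intros t Ht k.
    apply (is_derive_ext_loc (fun s => cp k x0 + RInt (fun u => cp k (g (Xl u))) 0 s)).
    exists (mkposreal t Ht). intros s Hs. change (Rabs (s - t) < t) in Hs. apply Rabs_def2 in Hs.
    rewrite Xl_cp by lra. rewrite Xf_int by lra. reflexivity.
    apply (isd_ext (fun s => cp k x0 + RInt (fun u => cp k (g (Xl u))) 0 s) _ t (0 + cp k (g (Xl t)))). intros; reflexivity. apply Rplus_0_l.
    apply isd_plus. apply isd_const. apply RInt_deriv. intros u. apply cont_gcomp. intros; apply Xl_cont.
  - apply Xl_cont.
Qed.
End Picard.

Lemma compact_bound (a b : R) (phi : R -> R -> Prop) :
  (forall x B B', B <= B' -> phi x B -> phi x B') ->
  (forall x, a <= x <= b -> exists eta, 0 < eta /\ exists B, forall x', a <= x' <= b -> Rabs (x' - x) < eta -> phi x' B) ->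
  a <= b -> exists B, forall x, a <= x <= b -> phi x B.
Proof.
  intros Hmono Hloc Hab.
  set (A := fun x => a <= x <= b /\ exists B, forall x', a <= x' <= x -> phi x' B).
  assert (HA : A a).
  { split. lra. destruct (Hloc a ltac:(lra)) as [eta [Heta [B HB]]]. exists B.
    intros x' Hx'. apply HB. lra. replace (x' - a) with 0 by lra. rewrite Rabs_R0. lra. }
  assert (Hb : bound A). { exists b. intros x [Hx _]. lra. }
  destruct (completeness A Hb (ex_intro _ a HA)) as [m Hm].
  pose proof Hm as [Hub Hlub].
  assert (Ham : a <= m) by (apply Hub; exact HA).
  assert (Hmb : m <= b) by (apply Hlub; intros x [Hx _]; lra).
  destruct (Hloc m ltac:(lra)) as [eta [Heta [Bm HBm]]].
  destruct (sup_approx A m Hm eta Heta) as [x [[Hx [Bx HBx]] Hxm]].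
  assert (Hxm' : x <= m) by (apply Hub; split; [assumption| exists Bx; assumption]).
  set (m' := Rmin (m + eta / 2) b).
  assert (Hm' : A m').
  { split. unfold m'. split. apply Rmin_glb; lra. apply Rmin_r.
    exists (Rmax Bx Bm). intros x' Hx'. destruct (Rle_or_lt x' x).
    - apply Hmono with Bx. apply Rmax_l. apply HBx. lra.
    - apply Hmono with Bm. apply Rmax_r. apply HBm. split. lra.
      apply Rle_trans with m'. lra. apply Rmin_r.
      assert (x' <= m + eta / 2). { apply Rle_trans with m'. lra. apply Rmin_l. }
      apply Rabs_def1; lra. }
  assert (m' <= m) by (apply Hub; exact Hm').
  assert (Hmb' : m' = b).
  { unfold m' in *. unfold Rmin in *. destruct (Rle_dec (m + eta / 2) b); lra. }
  destruct Hm' as [_ [B HB]]. exists B. intros x' Hx'. apply HB. lra.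
Qed.

Lemma bound2 (g : R -> R -> R) :
  (forall x y, continuous (fun p : R * R => g (fst p) (snd p)) (x, y)) ->
  forall a b c d, a <= b -> c <= d ->
  exists B, forall x y, a <= x <= b -> c <= y <= d -> Rabs (g x y) <= B.
Proof.
  intros Hc a b c d Hab Hcd.
  assert (Hin : forall x0, exists B, 0 < B /\ forall y, c <= y <= d -> forall x', Rabs (x' - x0) < / B -> Rabs (g x' y) <= B).
  { intros x0.
    destruct (compact_bound c d (fun y B => 0 < B /\ forall x', Rabs (x' - x0) < / B -> Rabs (g x' y) <= B)) as [B HB].
    - intros y B B' HBB [HB0 HB]. split. lra. intros x' Hx'. apply Rle_trans with B; [|exact HBB].
      apply HB. eapply Rlt_le_trans. exact Hx'. apply Rinv_le_contravar; lra.
    - intros y0 Hy0. destruct (cont_R2 g x0 y0 (Hc x0 y0) 1 Rlt_0_1) as [dl [Hdl Hdd]].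
      exists dl. split. exact Hdl. exists (Rmax (Rabs (g x0 y0) + 1) (/ dl)).
      intros y' Hy' Hyy. split. eapply Rlt_le_trans; [|apply Rmax_r]. apply Rinv_0_lt_compat; lra.
      intros x' Hx'.
      assert (Hx'' : Rabs (x' - x0) < dl).
      { eapply Rlt_le_trans. exact Hx'. apply Rle_trans with (/ / dl). apply Rinv_le_contravar.
        apply Rinv_0_lt_compat; lra. apply Rmax_r. rewrite Rinv_inv; lra. }
      specialize (Hdd x' y' Hx'' Hyy).
      eapply Rle_trans; [|apply Rmax_l].
      pose proof (Rabs_triang_inv (g x' y') (g x0 y0)). lra.
    - exact Hcd.
    - destruct (HB c ltac:(lra)) as [HB0 _]. exists B. split. exact HB0.
      intros y Hy. apply HB. exact Hy. }
  destruct (compact_bound a b (fun x B => forall y, c <= y <= d -> Rabs (g x y) <= B)) as [B HB].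
  - intros x B B' HBB H y Hy. apply Rle_trans with B. apply H; exact Hy. exact HBB.
  - intros x0 Hx0. destruct (Hin x0) as [B [HB0 HB]]. exists (/ B). split. apply Rinv_0_lt_compat; lra.
    exists B. intros x' _ Hx' y Hy. apply HB; assumption.
  - exact Hab.
  - exists B. intros x y Hx Hy. apply HB; assumption.
Qed.

Lemma C2_d1 F (HF : C2_R2 F) x y : is_derive (fun u => F u y) x (d1 F x y).
Proof. apply Derive_correct. apply (proj1 (proj1 HF x y)). Qed.
Lemma C2_d2 F (HF : C2_R2 F) x y : is_derive (fun v => F x v) y (d2 F x y).
Proof. apply Derive_correct. apply (proj2 (proj1 HF x y)). Qed.

Lemma isd_contpt (f : R -> R) x l : is_derive f x l -> continuity_pt f x.
Proof.
  intros H. apply continuity_pt_filterlim.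
  apply (ex_derive_continuous (K:=R_AbsRing) (V:=R_NormedModule)). exists l. exact H.
Qed.

Lemma mvt1 F (HF : C2_R2 F) x x' y : exists c, Rmin x x' <= c <= Rmax x x' /\
  F x' y - F x y = d1 F c y * (x' - x).
Proof.
  apply (MVT_gen (fun u => F u y) x x' (fun u => d1 F u y)).
  intros u _. apply C2_d1; exact HF. intros u _. eapply isd_contpt. apply C2_d1; exact HF.
Qed.
Lemma mvt2 F (HF : C2_R2 F) x y y' : exists c, Rmin y y' <= c <= Rmax y y' /\
  F x y' - F x y = d2 F x c * (y' - y).
Proof.
  apply (MVT_gen (fun v => F x v) y y' (fun v => d2 F x v)).
  intros u _. apply C2_d2; exact HF. intros u _. eapply isd_contpt. apply C2_d2; exact HF.
Qed.

Lemma C2_cont F (HF : C2_R2 F) x y : continuous (fun p : R * R => F (fst p) (snd p)) (x, y).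
Proof. apply (proj2 (proj2 HF) x y). Qed.
Lemma C2_cont1 F (HF : C2_R2 F) x y : continuous (fun p : R * R => d1 F (fst p) (snd p)) (x, y).
Proof. apply (proj2 (proj2 HF) x y). Qed.
Lemma C2_cont2 F (HF : C2_R2 F) x y : continuous (fun p : R * R => d2 F (fst p) (snd p)) (x, y).
Proof. apply (proj2 (proj2 HF) x y). Qed.

Lemma Rmin_Rmax_in a b c lo hi : lo <= a <= hi -> lo <= b <= hi -> Rmin a b <= c <= Rmax a b -> lo <= c <= hi.
Proof. unfold Rmin, Rmax; destruct (Rle_dec a b); lra. Qed.

Lemma lip_box F (HF : C2_R2 F) Mb : 0 <= Mb -> exists K, 0 <= K /\
  forall x y x' y', 0 <= x <= Mb -> 0 <= y <= Mb -> 0 <= x' <= Mb -> 0 <= y' <= Mb ->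
  Rabs (F x y - F x' y') <= K * (Rabs (x - x') + Rabs (y - y')).
Proof.
  intros HM.
  destruct (bound2 (d1 F) (C2_cont1 F HF) 0 Mb 0 Mb HM HM) as [B1 HB1].
  destruct (bound2 (d2 F) (C2_cont2 F HF) 0 Mb 0 Mb HM HM) as [B2 HB2].
  exists (Rmax B1 B2). split.
  { eapply Rle_trans; [|apply Rmax_l]. eapply Rle_trans; [apply Rabs_pos|]. apply (HB1 0 0); lra. }
  intros x y x' y' Hx Hy Hx' Hy'.
  destruct (mvt1 F HF x' x y) as [c1 [Hc1 E1]].
  destruct (mvt2 F HF x' y' y) as [c2 [Hc2 E2]].
  replace (F x y - F x' y') with ((F x y - F x' y) + (F x' y - F x' y')) by ring.
  rewrite E1, E2. eapply Rle_trans. apply Rabs_triang. rewrite !Rabs_mult.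
  pose proof (HB1 c1 y (Rmin_Rmax_in _ _ _ _ _ Hx' Hx Hc1) Hy).
  pose proof (HB2 x' c2 Hx' (Rmin_Rmax_in _ _ _ _ _ Hy' Hy Hc2)).
  pose proof (Rmax_l B1 B2). pose proof (Rmax_r B1 B2).
  pose proof (Rabs_pos (x - x')). pose proof (Rabs_pos (y - y')).
  nra.
Qed.

Definition clampv (Mb x : R) := Rmin (Rmax x 0) Mb.
Definition clamp (Mb : R) (x : state) := mk4 (fun k => clampv Mb (cp k x)).

Lemma clampv_in Mb x : 0 <= Mb -> 0 <= clampv Mb x <= Mb.
Proof. intros. unfold clampv, Rmin, Rmax. repeat destruct Rle_dec; lra. Qed.
Lemma clampv_lip Mb x y : 0 <= Mb -> Rabs (clampv Mb x - clampv Mb y) <= Rabs (x - y).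
Proof. intros. unfold clampv, Rmin, Rmax. repeat destruct Rle_dec; split_Rabs; lra. Qed.
Lemma clampv_neg Mb x : 0 <= Mb -> x < 0 -> clampv Mb x = 0.
Proof. intros. unfold clampv, Rmin, Rmax. repeat destruct Rle_dec; lra. Qed.
Lemma clampv_id Mb x : 0 <= x <= Mb -> clampv Mb x = x.
Proof. intros. unfold clampv, Rmin, Rmax. repeat destruct Rle_dec; lra. Qed.
Lemma sum_clamp Mb a b c d : 0 <= Mb -> 0 <= a -> 0 <= b -> 0 <= c -> 0 <= d ->
  Rmin (a + b + c + d) Mb <= clampv Mb a + clampv Mb b + clampv Mb c + clampv Mb d.
Proof. intros. unfold clampv, Rmin, Rmax. repeat destruct Rle_dec; lra. Qed.

Lemma prod_lip Mb a b a' b' : 0 <= a <= Mb -> 0 <= b <= Mb -> 0 <= a' <= Mb -> 0 <= b' <= Mb ->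
  Rabs (a * b - a' * b') <= Mb * (Rabs (a - a') + Rabs (b - b')).
Proof.
  intros. replace (a * b - a' * b') with (a * (b - b') + b' * (a - a')) by ring.
  eapply Rle_trans. apply Rabs_triang. rewrite !Rabs_mult.
  rewrite (Rabs_right a), (Rabs_right b') by lra.
  pose proof (Rabs_pos (a - a')). pose proof (Rabs_pos (b - b')). nra.
Qed.

Lemma abs_split x e : Rabs x <= e -> - e <= x <= e.
Proof. intros H. split_Rabs; lra. Qed.

Section Exist.
Variables (p : params) (F1 f1 F2 f2 : R -> R -> R).
Hypothesis Hp : params_ok p.
Hypothesis H1 : incidence_hyp F1 f1.
Hypothesis H2 : incidence_hyp F2 f2.

Lemma F1_C2 : C2_R2 F1. Proof. apply H1. Qed.
Lemma F2_C2 : C2_R2 F2. Proof. apply H2. Qed.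
Lemma F1_S0 I : 0 <= I -> F1 0 I = 0. Proof. apply H1. Qed.
Lemma F2_S0 I : 0 <= I -> F2 0 I = 0. Proof. apply H2. Qed.
Lemma F1_I0 S : 0 <= S -> F1 S 0 = 0. Proof. apply H1. Qed.
Lemma F2_I0 S : 0 <= S -> F2 S 0 = 0. Proof. apply H2. Qed.

Variable Mb : R.
Hypothesis HMb : 0 <= Mb.

Definition Gf (x : state) := field p F1 F2 (clamp Mb x).

Lemma Gf_lip : exists Lg, 0 < Lg /\ forall x y, dist4 (Gf x) (Gf y) <= Lg * dist4 x y.
Proof.
  destruct (lip_box F1 F1_C2 Mb HMb) as [K1 [HK1 HL1]].
  destruct (lip_box F2 F2_C2 Mb HMb) as [K2 [HK2 HL2]].
  destruct Hp as [HLam [Hmu [Hr [Hk [Hg1 [Hg2 [Hv1 Hv2]]]]]]].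
  set (Lg := 2 * K1 + 2 * K2 + lam p + r p + mu p + 2 * k p * Mb + alpha1 p + alpha2 p + 1).
  assert (Hpos : 0 < lam p /\ 0 < alpha1 p /\ 0 < alpha2 p).
  { unfold lam, alpha1, alpha2. repeat split; lra. }
  exists Lg. split. unfold Lg. assert (0 <= k p * Mb) by nra. lra.
  intros x y. set (d := dist4 x y).
  assert (Hc : forall kk, 0 <= clampv Mb (cp kk x) <= Mb /\ 0 <= clampv Mb (cp kk y) <= Mb /\
      Rabs (clampv Mb (cp kk x) - clampv Mb (cp kk y)) <= d).
  { intros kk. split. apply clampv_in; lra. split. apply clampv_in; lra.
    eapply Rle_trans. apply clampv_lip; lra. apply dist4_ge. }
  destruct (Hc i0) as [hs1 [hs2 hs]]. destruct (Hc i1) as [hv1 [hv2 hv]].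
  destruct (Hc i2) as [ha1 [ha2 ha]]. destruct (Hc i3) as [hb1 [hb2 hb]].
  unfold Gf, clamp, field, mk4. simpl cp in *.
  set (s1 := clampv Mb (sS x)) in *. set (s2 := clampv Mb (sS y)) in *.
  set (v1' := clampv Mb (sV x)) in *. set (v2' := clampv Mb (sV y)) in *.
  set (a1 := clampv Mb (sI1 x)) in *. set (a2 := clampv Mb (sI1 y)) in *.
  set (b1 := clampv Mb (sI2 x)) in *. set (b2 := clampv Mb (sI2 y)) in *.
  pose proof (HL1 s1 a1 s2 a2 hs1 ha1 hs2 ha2) as E1.
  pose proof (HL2 s1 b1 s2 b2 hs1 hb1 hs2 hb2) as E2.
  pose proof (prod_lip Mb b1 v1' b2 v2' hb1 hv1 hb2 hv2) as E3.
  assert (Hd : 0 <= d) by apply dist4_nonneg.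
  assert (EE1 : Rabs (F1 s1 a1 - F1 s2 a2) <= 2 * K1 * d) by nra.
  assert (EE2 : Rabs (F2 s1 b1 - F2 s2 b2) <= 2 * K2 * d) by nra.
  assert (EE3 : Rabs (b1 * v1' - b2 * v2') <= 2 * Mb * d) by nra.
  assert (0 <= k p * Mb) by nra.
  apply abs_split in hs. apply abs_split in hv. apply abs_split in ha. apply abs_split in hb.
  apply abs_split in EE1. apply abs_split in EE2. apply abs_split in EE3.
  assert (HLg : 2 * K1 * d + 2 * K2 * d + lam p * d + r p * d + mu p * d + k p * (2 * Mb * d)
     + alpha1 p * d + alpha2 p * d <= Lg * d) by (unfold Lg; nra).
  apply dist4_le. intros [ | | | ]; simpl; apply Rabs_le; split; nra.
Qed.

Lemma Gf_nonneg x kk : cp kk x < 0 -> 0 <= cp kk (Gf x).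
Proof.
  destruct Hp as [HLam [Hmu [Hr [Hk _]]]].
  intros Hx. unfold Gf, clamp, field, mk4. destruct kk; simpl in *; rewrite (clampv_neg Mb _ HMb Hx).
  - rewrite F1_S0, F2_S0 by (apply clampv_in; lra). lra.
  - pose proof (clampv_in Mb (sS x) HMb). rewrite Rmult_0_r, Rminus_0_r. apply Rmult_le_pos; lra.
  - rewrite F1_I0 by (apply clampv_in; lra). lra.
  - rewrite F2_I0 by (apply clampv_in; lra). lra.
Qed.

Lemma Gf_sum x : cp i0 (Gf x) + cp i1 (Gf x) + cp i2 (Gf x) + cp i3 (Gf x) =
  Lam p - mu p * clampv Mb (sS x) - mu p * clampv Mb (sV x) - alpha1 p * clampv Mb (sI1 x)
  - alpha2 p * clampv Mb (sI2 x).
Proof. unfold Gf, clamp, field, mk4, lam. simpl. ring. Qed.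

Lemma cont_right0 (h : R -> R) : continuous h 0 -> filterlim h (at_right 0) (locally (h 0)).
Proof. apply cont_right. Qed.

Lemma inv_sol (x0 : state) (K0 : R) : nonneg_state x0 ->
  sS x0 + sV x0 + sI1 x0 + sI2 x0 <= K0 -> Lam p / mu p <= K0 -> K0 < Mb ->
  exists X, is_solution p F1 F2 X /\ X 0 = x0 /\
    forall t, 0 <= t -> nonneg_state (X t).
Proof.
  intros Hx0 HN0 HK0 HKM.
  destruct Hp as [HLam [Hmu [Hr [Hk [Hg1 [Hg2 [Hv1 Hv2]]]]]]].
  destruct Gf_lip as [Lg [HLg Hlip]].
  destruct (picard_sol Gf Lg HLg Hlip x0) as [HY0 [HYd HYc]].
  set (Y := Xl Gf x0) in *.
  assert (Hnn : forall kk t, 0 <= t -> 0 <= cp kk (Y t)).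
  { intros kk t Ht.
    assert (H := upper_barrier (fun t => -1 * cp kk (Y t)) (fun t => -1 * cp kk (Gf (Y t)))).
    assert (Hle : -1 * cp kk (Y t) <= 0).
    { apply H.
      - intros u Hu. apply isd_scal. apply HYd. exact Hu.
      - apply cont_right0. apply cont_multR. apply continuous_const. apply HYc.
      - rewrite HY0. destruct Hx0 as [a [b [c d]]]. destruct kk; simpl; lra.
      - intros u Hu Hneg. assert (cp kk (Y u) < 0) by lra. pose proof (Gf_nonneg (Y u) kk H0). lra.
      - exact Ht. }
    lra. }
  assert (HN : forall t, 0 <= t -> cp i0 (Y t) + cp i1 (Y t) + cp i2 (Y t) + cp i3 (Y t) <= K0).
  { intros t Ht.
    apply (upper_barrier (fun t => cp i0 (Y t) + cp i1 (Y t) + cp i2 (Y t) + cp i3 (Y t))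
             (fun t => cp i0 (Gf (Y t)) + cp i1 (Gf (Y t)) + cp i2 (Gf (Y t)) + cp i3 (Gf (Y t)))).
    - intros u Hu. apply isd_plus; [apply isd_plus; [apply isd_plus|]|]; apply HYd; exact Hu.
    - apply cont_right0. apply cont_plusR; [apply cont_plusR; [apply cont_plusR|]|]; apply HYc.
    - rewrite HY0. simpl. lra.
    - intros u Hu Hgt. rewrite Gf_sum.
      pose proof (sum_clamp Mb _ _ _ _ HMb (Hnn i0 u ltac:(lra)) (Hnn i1 u ltac:(lra)) (Hnn i2 u ltac:(lra)) (Hnn i3 u ltac:(lra))).
      cbv beta in Hgt. cbn [cp] in H, Hgt.
      assert (Hmin : K0 < Rmin (sS (Y u) + sV (Y u) + sI1 (Y u) + sI2 (Y u)) Mb).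
      { apply Rmin_glb_lt. lra. lra. }
      assert (Lam p <= mu p * K0).
      { replace (Lam p) with (mu p * (Lam p / mu p)) by (field; lra). apply Rmult_le_compat_l; lra. }
      pose proof (clampv_in Mb (sI1 (Y u)) HMb). pose proof (clampv_in Mb (sI2 (Y u)) HMb).
      assert (alpha1 p * clampv Mb (sI1 (Y u)) >= mu p * clampv Mb (sI1 (Y u))).
      { apply Rle_ge, Rmult_le_compat_r. lra. unfold alpha1. lra. }
      assert (alpha2 p * clampv Mb (sI2 (Y u)) >= mu p * clampv Mb (sI2 (Y u))).
      { apply Rle_ge, Rmult_le_compat_r. lra. unfold alpha2. lra. }
      assert (mu p * K0 < mu p * Rmin (sS (Y u) + sV (Y u) + sI1 (Y u) + sI2 (Y u)) Mb).
      { apply Rmult_lt_compat_l; lra. }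
      assert (mu p * Rmin (sS (Y u) + sV (Y u) + sI1 (Y u) + sI2 (Y u)) Mb <=
              mu p * (clampv Mb (sS (Y u)) + clampv Mb (sV (Y u)) + clampv Mb (sI1 (Y u)) + clampv Mb (sI2 (Y u)))).
      { apply Rmult_le_compat_l; lra. }
      lra.
    - exact Ht. }
  assert (Hbox : forall t, 0 <= t -> clamp Mb (Y t) = Y t).
  { intros t Ht. unfold clamp.
    assert (forall kk, clampv Mb (cp kk (Y t)) = cp kk (Y t)).
    { intros kk. apply clampv_id. split. apply Hnn; lra.
      pose proof (HN t Ht). pose proof (Hnn i0 t Ht). pose proof (Hnn i1 t Ht).
      pose proof (Hnn i2 t Ht). pose proof (Hnn i3 t Ht). destruct kk; lra. }
    transitivity (mk4 (fun kk => cp kk (Y t))). unfold mk4. rewrite !H. reflexivity. apply mk4_cp. }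
  exists Y. split; [|split].
  - assert (HG : forall t, 0 < t -> Gf (Y t) = field p F1 F2 (Y t)).
    { intros t Ht. unfold Gf. rewrite Hbox by lra. reflexivity. }
    split.
    + intros t Ht. rewrite <- HG by exact Ht.
      exact (conj (HYd t Ht i0) (conj (HYd t Ht i1) (conj (HYd t Ht i2) (HYd t Ht i3)))).
    + exact (conj (cont_right0 _ (HYc i0 0)) (conj (cont_right0 _ (HYc i1 0))
             (conj (cont_right0 _ (HYc i2 0)) (cont_right0 _ (HYc i3 0))))).
  - exact HY0.
  - intros t Ht. exact (conj (Hnn i0 t Ht) (conj (Hnn i1 t Ht) (conj (Hnn i2 t Ht) (Hnn i3 t Ht)))).
Qed.
End Exist.

Lemma exist_sol p F1 f1 F2 f2 : params_ok p -> incidence_hyp F1 f1 -> incidence_hyp F2 f2 ->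
  forall x0, nonneg_state x0 -> exists X, is_solution p F1 F2 X /\ X 0 = x0 /\
    forall t, 0 <= t -> nonneg_state (X t).
Proof.
  intros Hp H1 H2 x0 Hx0.
  set (K0 := Rmax (sS x0 + sV x0 + sI1 x0 + sI2 x0) (Lam p / mu p)).
  assert (HK : 0 <= K0). { unfold K0. destruct Hx0 as [a [b [c d]]]. eapply Rle_trans; [|apply Rmax_l]. lra. }
  apply (inv_sol p F1 f1 F2 f2 Hp H1 H2 (K0 + 1) ltac:(lra) x0 K0 Hx0).
  apply Rmax_l. apply Rmax_r. lra.
Qed.

Lemma rc_plus (f g : R -> R) a lf lg : filterlim f (at_right a) (locally lf) ->
  filterlim g (at_right a) (locally lg) -> filterlim (fun t => f t + g t) (at_right a) (locally (lf + lg)).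
Proof. intros Hf Hg. apply (filterlim_comp_2 f g Rplus Hf Hg). apply (filterlim_plus (V:=R_NormedModule)). Qed.
Lemma rc_mult (f g : R -> R) a lf lg : filterlim f (at_right a) (locally lf) ->
  filterlim g (at_right a) (locally lg) -> filterlim (fun t => f t * g t) (at_right a) (locally (lf * lg)).
Proof. intros Hf Hg. apply (filterlim_comp_2 f g Rmult Hf Hg). apply (filterlim_mult (K:=R_AbsRing)). Qed.
Lemma rc_const (c a : R) : filterlim (fun _ : R => c) (at_right a) (locally c).
Proof. apply filterlim_const. Qed.
Lemma rc_cont (f : R -> R) a : continuous f a -> filterlim f (at_right a) (locally (f a)).
Proof. apply cont_right. Qed.
Lemma rc_minus (f g : R -> R) a lf lg : filterlim f (at_right a) (locally lf) ->
  filterlim g (at_right a) (locally lg) -> filterlim (fun t => f t - g t) (at_right a) (locally (lf - lg)).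
Proof.
  intros Hf Hg. apply (rc_plus f (fun t => - g t)). exact Hf.
  replace (- lg) with (-1 * lg) by ring. apply (filterlim_ext (fun t => -1 * g t)). intros; ring.
  apply (rc_mult (fun _ => -1) g a). apply rc_const. exact Hg.
Qed.

Ltac rc_tac := repeat match goal with
 | |- filterlim (fun _ => ?c) (at_right _) _ => apply rc_const
 | |- filterlim (fun t => @?f t - @?g t) (at_right _) _ => apply (rc_minus f g)
 | |- filterlim (fun t => @?f t + @?g t) (at_right _) _ => apply (rc_plus f g)
 | |- filterlim (fun t => @?f t * @?g t) (at_right _) _ => apply (rc_mult f g)
 | H : filterlim ?s (at_right _) _ |- filterlim (fun t => ?s t) (at_right _) _ => exact H
 end.

Ltac isd_tac := repeat match goal with
 | |- is_derive (fun _ => ?c) _ _ => apply isd_const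
 | |- is_derive (fun t => @?f t - @?g t) _ _ => apply (isd_minus f g)
 | |- is_derive (fun t => @?f t + @?g t) _ _ => apply (isd_plus f g)
 | |- is_derive (fun t => @?f t * @?g t) _ _ => apply (isd_mult f g)
 | H : is_derive ?s _ _ |- is_derive (fun t => ?s t) _ _ => exact H
 end.

Section Lyap.
Variables a b la al1 beta mu r k Vb delta : R.
Hypothesis Ha : 0 < a.
Hypothesis Hla : 0 < la.
Hypothesis Hb : b <= al1.
Hypothesis Hal1 : 0 < al1.
Hypothesis Hmu : 0 < mu.
Hypothesis Hr : 0 < r.
Hypothesis Hk : 0 < k.
Hypothesis HVb : 0 < Vb.
Hypothesis Hdelta : 0 < delta.

Definition q := al1 - b.
Definition pp := a + la.
Definition DD := pp * q + a * b.
Definition tau := pp + q.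
Definition cv := mu * tau * DD / (4 * (r * r)).
Definition g1 := DD + q * q + a * a.
Definition g2 := a * pp - q * b.
Definition h2 := DD + b * b + pp * pp.
Definition cj := (1 + 2 * (beta * beta) * (g1 * g1 + g2 * g2) / (tau * DD) + 2 * cv * (k * k) * (Vb * Vb) / mu) / (2 * delta).

Lemma q_nonneg : 0 <= q. Proof. unfold q; lra. Qed.
Lemma DD_pos : 0 < DD.
Proof. unfold DD, pp. pose proof q_nonneg. replace ((a + la) * q + a * b) with (la * q + a * al1) by (unfold q; ring). nra. Qed.
Lemma tau_pos : 0 < tau. Proof. unfold tau, pp. pose proof q_nonneg. lra. Qed.
Lemma cv_pos : 0 < cv.
Proof. unfold cv. pose proof DD_pos. pose proof tau_pos. apply Rdiv_lt_0_compat. repeat apply Rmult_lt_0_compat; lra. nra. Qed.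
Lemma cj_pos : 0 < cj.
Proof.
  unfold cj. pose proof DD_pos. pose proof tau_pos. pose proof cv_pos.
  apply Rdiv_lt_0_compat; [|lra].
  assert (0 <= 2 * (beta * beta) * (g1 * g1 + g2 * g2) / (tau * DD)).
  { apply Rdiv_le_0_compat. pose proof (Rle_0_sqr beta). pose proof (Rle_0_sqr g1). pose proof (Rle_0_sqr g2). unfold Rsqr in *. nra. nra. }
  assert (0 <= 2 * cv * (k * k) * (Vb * Vb) / mu).
  { apply Rdiv_le_0_compat. pose proof (Rle_0_sqr k). pose proof (Rle_0_sqr Vb). unfold Rsqr in *.
    apply Rmult_le_pos. apply Rmult_le_pos. lra. lra. lra. lra. }
  lra.
Qed.

Definition dLf (s i v j ds di dv dj : R) :=
  2 * (g1 * s + g2 * i) * ds + 2 * (g2 * s + h2 * i) * di + 2 * cv * v * dv + 2 * cj * j * dj.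

Definition lin (s i v j : R) :=
  dLf s i v j (- pp * s - b * i - beta * j) (a * s - q * i) (r * s - mu * v - k * Vb * j) (- delta * j).

Lemma lin_identity s i v j :
  - tau * DD * (s * s + i * i) - cv * mu * (v * v) - j * j - lin s i v j =
  tau * DD / 2 * ((s + 2 * beta * g1 * j / (tau * DD)) * (s + 2 * beta * g1 * j / (tau * DD)))
  + tau * DD / 2 * ((i + 2 * beta * g2 * j / (tau * DD)) * (i + 2 * beta * g2 * j / (tau * DD)))
  + tau * DD / 2 * ((s - 2 * cv * r * v / (tau * DD)) * (s - 2 * cv * r * v / (tau * DD)))
  + cv * mu / 2 * ((v + 2 * k * Vb * j / mu) * (v + 2 * k * Vb * j / mu))
  + tau * DD / 2 * (i * i).
Proof.
  pose proof DD_pos. pose proof tau_pos.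
  unfold lin, dLf, cj, cv, g1, g2, h2. unfold DD, tau, pp, q in *.
  field. repeat split; lra.
Qed.

Definition kap := Rmin (Rmin (tau * DD) (cv * mu)) 1.
Lemma kap_pos : 0 < kap.
Proof. unfold kap. pose proof DD_pos. pose proof tau_pos. pose proof cv_pos.
  repeat apply Rmin_pos; try lra; apply Rmult_lt_0_compat; lra. Qed.

Lemma lin_bound s i v j : lin s i v j <= - kap * (s * s + i * i + v * v + j * j).
Proof.
  pose proof (lin_identity s i v j) as E. pose proof DD_pos. pose proof tau_pos. pose proof cv_pos.
  assert (Hk1 : kap <= tau * DD) by (unfold kap; eapply Rle_trans; [apply Rmin_l|apply Rmin_l]).
  assert (Hk2 : kap <= cv * mu) by (unfold kap; eapply Rle_trans; [apply Rmin_l|apply Rmin_r]).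
  assert (Hk3 : kap <= 1) by (unfold kap; apply Rmin_r).
  set (x1 := s + 2 * beta * g1 * j / (tau * DD)) in *.
  set (x2 := i + 2 * beta * g2 * j / (tau * DD)) in *.
  set (x3 := s - 2 * cv * r * v / (tau * DD)) in *.
  set (x4 := v + 2 * k * Vb * j / mu) in *.
  assert (0 < tau * DD) by (apply Rmult_lt_0_compat; lra).
  assert (0 <= tau * DD / 2 * (x1 * x1)) by (apply Rmult_le_pos; [lra|apply Rle_0_sqr]).
  assert (0 <= tau * DD / 2 * (x2 * x2)) by (apply Rmult_le_pos; [lra|apply Rle_0_sqr]).
  assert (0 <= tau * DD / 2 * (x3 * x3)) by (apply Rmult_le_pos; [lra|apply Rle_0_sqr]).
  assert (0 < cv * mu) by (apply Rmult_lt_0_compat; lra).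
  assert (0 <= cv * mu / 2 * (x4 * x4)) by (apply Rmult_le_pos; [lra|apply Rle_0_sqr]).
  assert (0 <= tau * DD / 2 * (i * i)) by (apply Rmult_le_pos; [lra|apply Rle_0_sqr]).
  pose proof (Rle_0_sqr s). pose proof (Rle_0_sqr i). pose proof (Rle_0_sqr v). pose proof (Rle_0_sqr j).
  unfold Rsqr in *.
  assert (kap * (s * s) <= tau * DD * (s * s)) by (apply Rmult_le_compat_r; lra).
  assert (kap * (i * i) <= tau * DD * (i * i)) by (apply Rmult_le_compat_r; lra).
  assert (kap * (v * v) <= cv * mu * (v * v)) by (apply Rmult_le_compat_r; lra).
  assert (kap * (j * j) <= 1 * (j * j)) by (apply Rmult_le_compat_r; lra).
  lra.
Qed.

Definition NLt (s i v j e1 e2 : R) :=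
  2 * (g1 * s + g2 * i) * (- e1 - e2) + 2 * (g2 * s + h2 * i) * e1 + 2 * cv * v * (- k * j * v)
  + 2 * cj * j * (e2 + k * j * v).

Lemma full_split s i v j e1 e2 :
  dLf s i v j (- pp * s - b * i - beta * j - e1 - e2) (a * s - q * i + e1)
     (r * s - mu * v - k * Vb * j - k * j * v) (- delta * j + e2 + k * j * v)
  = lin s i v j + NLt s i v j e1 e2.
Proof. unfold lin, NLt, dLf. ring. Qed.

Lemma abs_mul_le x y X Y : Rabs x <= X -> Rabs y <= Y -> Rabs (x * y) <= X * Y.
Proof. intros. rewrite Rabs_mult. apply Rmult_le_compat; auto using Rabs_pos. Qed.

Definition C1 := 8 * (Rabs g1 + Rabs g2) + 4 * (Rabs g2 + Rabs h2) + 4 * cj.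
Definition C2 := 2 * cv * k + 2 * cj * k.

Lemma NL_bound s i v j e1 e2 nu eps : 0 <= eps ->
  Rabs s <= nu -> Rabs i <= nu -> Rabs v <= nu -> Rabs j <= nu ->
  Rabs e1 <= 2 * eps * nu -> Rabs e2 <= 2 * eps * nu ->
  NLt s i v j e1 e2 <= nu * nu * (eps * C1 + nu * C2).
Proof.
  intros He Hs Hi Hv Hj H1 H2.
  assert (Hnu : 0 <= nu) by (eapply Rle_trans; [apply Rabs_pos|exact Hs]).
  pose proof cv_pos. pose proof cj_pos.
  assert (A1 : Rabs (2 * (g1 * s + g2 * i)) <= 2 * (Rabs g1 + Rabs g2) * nu).
  { rewrite Rabs_mult, (Rabs_right 2) by lra. eapply Rle_trans. apply Rmult_le_compat_l. lra. apply Rabs_triang.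
    pose proof (abs_mul_le g1 s (Rabs g1) nu (Rle_refl _) Hs). pose proof (abs_mul_le g2 i (Rabs g2) nu (Rle_refl _) Hi). lra. }
  assert (A2 : Rabs (2 * (g2 * s + h2 * i)) <= 2 * (Rabs g2 + Rabs h2) * nu).
  { rewrite Rabs_mult, (Rabs_right 2) by lra. eapply Rle_trans. apply Rmult_le_compat_l. lra. apply Rabs_triang.
    pose proof (abs_mul_le g2 s (Rabs g2) nu (Rle_refl _) Hs). pose proof (abs_mul_le h2 i (Rabs h2) nu (Rle_refl _) Hi). lra. }
  assert (B1 : Rabs (- e1 - e2) <= 4 * eps * nu).
  { replace (- e1 - e2) with (- (e1 + e2)) by ring. rewrite Rabs_Ropp. eapply Rle_trans. apply Rabs_triang. lra. }
  assert (Hjv : Rabs (j * v) <= nu * nu) by (apply abs_mul_le; assumption).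
  assert (T1 := abs_mul_le _ _ _ _ A1 B1).
  assert (T2 := abs_mul_le _ _ _ _ A2 H1).
  assert (B3 : Rabs (- k * j * v) <= k * (nu * nu)).
  { replace (- k * j * v) with (- (k * (j * v))) by ring. rewrite Rabs_Ropp, Rabs_mult, (Rabs_right k) by lra.
    apply Rmult_le_compat_l; lra. }
  assert (A3 : Rabs (2 * cv * v) <= 2 * cv * nu).
  { rewrite Rabs_mult, (Rabs_right (2 * cv)) by lra. apply Rmult_le_compat_l; lra. }
  assert (T3 := abs_mul_le _ _ _ _ A3 B3).
  assert (A4 : Rabs (2 * cj * j) <= 2 * cj * nu).
  { rewrite Rabs_mult, (Rabs_right (2 * cj)) by lra. apply Rmult_le_compat_l; lra. }
  assert (B4 : Rabs (e2 + k * j * v) <= 2 * eps * nu + k * (nu * nu)).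
  { eapply Rle_trans. apply Rabs_triang. replace (k * j * v) with (k * (j * v)) by ring.
    rewrite Rabs_mult, (Rabs_right k) by lra. assert (k * Rabs (j * v) <= k * (nu * nu)) by (apply Rmult_le_compat_l; lra). lra. }
  assert (T4 := abs_mul_le _ _ _ _ A4 B4).
  unfold NLt.
  eapply Rle_trans. apply Rle_abs.
  eapply Rle_trans. apply Rabs_triang. eapply Rle_trans. apply Rplus_le_compat_r. apply Rabs_triang.
  eapply Rle_trans. apply Rplus_le_compat_r. apply Rplus_le_compat_r. apply Rabs_triang.
  unfold C1, C2. 
  replace (2 * (g1 * s + g2 * i) * (- e1 - e2)) with ((2 * (g1 * s + g2 * i)) * (- e1 - e2)) by ring.
  replace (2 * cv * v * (- k * j * v)) with ((2 * cv * v) * (- k * j * v)) by ring.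
  replace (2 * cj * j * (e2 + k * j * v)) with ((2 * cj * j) * (e2 + k * j * v)) by ring.
  apply Rle_trans with (2 * (Rabs g1 + Rabs g2) * nu * (4 * eps * nu) + 2 * (Rabs g2 + Rabs h2) * nu * (2 * eps * nu)
     + 2 * cv * nu * (k * (nu * nu)) + 2 * cj * nu * (2 * eps * nu + k * (nu * nu))).
  lra. right. ring.
Qed.

Definition Lf (s i v j : R) :=
  DD * (s * s + i * i) + (q * s - b * i) * (q * s - b * i) + (a * s + pp * i) * (a * s + pp * i)
  + cv * (v * v) + cj * (j * j).

Lemma Lf_deriv (s i v j : R -> R) t ds di dv dj :
  is_derive s t ds -> is_derive i t di -> is_derive v t dv -> is_derive j t dj ->
  is_derive (fun u => Lf (s u) (i u) (v u) (j u)) t (dLf (s t) (i t) (v t) (j t) ds di dv dj).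
Proof.
  intros Hs Hi Hv Hj. unfold Lf.
  eapply isd_ext; [intros; reflexivity| | isd_tac].
  unfold dLf, g1, g2, h2. match goal with |- ?x = ?y => change (@eq R x y) end. ring.
Qed.

Lemma Lf_rc (s i v j : R -> R) :
  filterlim s (at_right 0) (locally (s 0)) -> filterlim i (at_right 0) (locally (i 0)) ->
  filterlim v (at_right 0) (locally (v 0)) -> filterlim j (at_right 0) (locally (j 0)) ->
  filterlim (fun u => Lf (s u) (i u) (v u) (j u)) (at_right 0) (locally (Lf (s 0) (i 0) (v 0) (j 0))).
Proof.
  intros Hs Hi Hv Hj. unfold Lf.
  rc_tac.
Qed.

Definition Lmin := Rmin (Rmin DD cv) cj.
Definition Lmax := DD + 2 * (q * q + b * b) + 2 * (a * a + pp * pp) + cv + cj.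

Lemma Lmin_pos : 0 < Lmin.
Proof. unfold Lmin. pose proof DD_pos. pose proof cv_pos. pose proof cj_pos. repeat apply Rmin_pos; lra. Qed.

Lemma Lf_lower s i v j : Lmin * (s * s + i * i + v * v + j * j) <= Lf s i v j.
Proof.
  unfold Lf. pose proof DD_pos. pose proof cv_pos. pose proof cj_pos.
  assert (HL1 : Lmin <= DD) by (unfold Lmin; eapply Rle_trans; [apply Rmin_l|apply Rmin_l]).
  assert (HL2 : Lmin <= cv) by (unfold Lmin; eapply Rle_trans; [apply Rmin_l|apply Rmin_r]).
  assert (HL3 : Lmin <= cj) by (unfold Lmin; apply Rmin_r).
  pose proof (Rle_0_sqr s). pose proof (Rle_0_sqr i). pose proof (Rle_0_sqr v). pose proof (Rle_0_sqr j).
  pose proof (Rle_0_sqr (q * s - b * i)). pose proof (Rle_0_sqr (a * s + pp * i)). unfold Rsqr in *.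
  assert (Lmin * (s * s + i * i) <= DD * (s * s + i * i)) by (apply Rmult_le_compat_r; lra).
  assert (Lmin * (v * v) <= cv * (v * v)) by (apply Rmult_le_compat_r; lra).
  assert (Lmin * (j * j) <= cj * (j * j)) by (apply Rmult_le_compat_r; lra).
  lra.
Qed.

Lemma Lf_upper s i v j : Lf s i v j <= Lmax * (s * s + i * i + v * v + j * j).
Proof.
  unfold Lf, Lmax. pose proof DD_pos. pose proof cv_pos. pose proof cj_pos.
  assert ((q * s - b * i) * (q * s - b * i) <= 2 * (q * q + b * b) * (s * s + i * i)).
  { pose proof (Rle_0_sqr (q * s + b * i)). pose proof (Rle_0_sqr (q * i)). pose proof (Rle_0_sqr (b * s)).
    unfold Rsqr in *. nra. }
  assert ((a * s + pp * i) * (a * s + pp * i) <= 2 * (a * a + pp * pp) * (s * s + i * i)).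
  { pose proof (Rle_0_sqr (a * s - pp * i)). pose proof (Rle_0_sqr (a * i)). pose proof (Rle_0_sqr (pp * s)).
    unfold Rsqr in *. nra. }
  pose proof (Rle_0_sqr s). pose proof (Rle_0_sqr i). pose proof (Rle_0_sqr v). pose proof (Rle_0_sqr j).
  pose proof (Rle_0_sqr q). pose proof (Rle_0_sqr b). pose proof (Rle_0_sqr a). pose proof (Rle_0_sqr pp).
  unfold Rsqr in *. nra.
Qed.

Lemma Lmax_pos : 0 < Lmax.
Proof.
  unfold Lmax. pose proof DD_pos. pose proof cv_pos. pose proof cj_pos.
  pose proof (Rle_0_sqr q). pose proof (Rle_0_sqr b). pose proof (Rle_0_sqr a). pose proof (Rle_0_sqr pp).
  unfold Rsqr in *. lra.
Qed.
End Lyap.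

Lemma lin2 F (HF : C2_R2 F) x0 y0 : forall eps, 0 < eps -> exists rho, 0 < rho /\
  forall x y, Rabs (x - x0) < rho -> Rabs (y - y0) < rho ->
  Rabs (F x y - F x0 y0 - d1 F x0 y0 * (x - x0) - d2 F x0 y0 * (y - y0)) <= eps * (Rabs (x - x0) + Rabs (y - y0)).
Proof.
  intros eps He.
  destruct (cont_R2 _ x0 y0 (C2_cont1 F HF x0 y0) eps He) as [d1' [Hd1 H1]].
  destruct (cont_R2 _ x0 y0 (C2_cont2 F HF x0 y0) eps He) as [d2' [Hd2 H2]].
  exists (Rmin d1' d2'). split. apply Rmin_pos; assumption.
  intros x y Hx Hy.
  assert (Hx1 : Rabs (x - x0) < d1') by (eapply Rlt_le_trans; [exact Hx|apply Rmin_l]).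
  assert (Hy1 : Rabs (y - y0) < d1') by (eapply Rlt_le_trans; [exact Hy|apply Rmin_l]).
  assert (Hy2 : Rabs (y - y0) < d2') by (eapply Rlt_le_trans; [exact Hy|apply Rmin_r]).
  destruct (mvt1 F HF x0 x y) as [c1 [Hc1 E1]].
  destruct (mvt2 F HF x0 y0 y) as [c2 [Hc2 E2]].
  assert (Hc1' : Rabs (c1 - x0) < d1').
  { apply Rle_lt_trans with (Rabs (x - x0)); [|exact Hx1].
    unfold Rmin, Rmax in Hc1. destruct (Rle_dec x0 x); split_Rabs; lra. }
  assert (Hc2' : Rabs (c2 - y0) < d2').
  { apply Rle_lt_trans with (Rabs (y - y0)); [|exact Hy2].
    unfold Rmin, Rmax in Hc2. destruct (Rle_dec y0 y); split_Rabs; lra. }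
  specialize (H1 c1 y Hc1' Hy1). specialize (H2 x0 c2 ltac:(rewrite Rminus_diag, Rabs_R0; lra) Hc2').
  replace (F x y - F x0 y0 - d1 F x0 y0 * (x - x0) - d2 F x0 y0 * (y - y0)) with
    ((F x y - F x0 y) - d1 F x0 y0 * (x - x0) + ((F x0 y - F x0 y0) - d2 F x0 y0 * (y - y0))) by ring.
  rewrite E1, E2.
  replace (d1 F c1 y * (x - x0) - d1 F x0 y0 * (x - x0)) with ((d1 F c1 y - d1 F x0 y0) * (x - x0)) by ring.
  replace (d2 F x0 c2 * (y - y0) - d2 F x0 y0 * (y - y0)) with ((d2 F x0 c2 - d2 F x0 y0) * (y - y0)) by ring.
  eapply Rle_trans. apply Rabs_triang. rewrite !Rabs_mult.
  pose proof (Rabs_pos (x - x0)). pose proof (Rabs_pos (y - y0)).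
  assert (Rabs (d1 F c1 y - d1 F x0 y0) * Rabs (x - x0) <= eps * Rabs (x - x0)) by (apply Rmult_le_compat_r; lra).
  assert (Rabs (d2 F x0 c2 - d2 F x0 y0) * Rabs (y - y0) <= eps * Rabs (y - y0)) by (apply Rmult_le_compat_r; lra).
  lra.
Qed.

Lemma beta_eq F f (HF : incidence_hyp F f) S0 : 0 <= S0 -> d2 F S0 0 = f S0 0.
Proof.
  intros HS. destruct HF as [HF [Hf [_ [HIf [_ [HI0 _]]]]]].
  pose proof (C2_d2 F HF S0 0) as Hd. apply is_derive_Reals in Hd.
  destruct (Req_dec (d2 F S0 0) (f S0 0)) as [|Hne]. assumption. exfalso.
  set (e := Rabs (d2 F S0 0 - f S0 0) / 2).
  assert (He : 0 < e) by (unfold e; apply Rdiv_lt_0_compat; [apply Rabs_pos_lt; lra|lra]).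
  destruct (Hd e He) as [dl Hdl].
  destruct (cont_R2 f S0 0 (C2_cont f Hf S0 0) e He) as [d' [Hd' Hc]].
  set (h := Rmin (dl / 2) (d' / 2)).
  assert (Hh : 0 < h /\ h < dl /\ h < d').
  { unfold h. pose proof (cond_pos dl). split. apply Rmin_pos; lra. split.
    eapply Rle_lt_trans. apply Rmin_l. lra. eapply Rle_lt_trans. apply Rmin_r. lra. }
  specialize (Hdl h ltac:(lra) ltac:(rewrite Rabs_right; lra)).
  rewrite Rplus_0_l, HI0, (HIf S0 h HS ltac:(lra)) in Hdl by lra.
  replace ((h * f S0 h - 0) / h) with (f S0 h) in Hdl by (field; lra).
  specialize (Hc S0 h ltac:(rewrite Rminus_diag, Rabs_R0; lra) ltac:(rewrite Rminus_0_r, Rabs_right; lra)).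
  assert (Rabs (d2 F S0 0 - f S0 0) <= Rabs (f S0 h - d2 F S0 0) + Rabs (f S0 h - f S0 0)).
  { replace (d2 F S0 0 - f S0 0) with (- (f S0 h - d2 F S0 0) + (f S0 h - f S0 0)) by ring.
    eapply Rle_trans. apply Rabs_triang. rewrite Rabs_Ropp. lra. }
  unfold e in *. lra.
Qed.


Lemma equil_facts p F1 F2 Sb Vb Ib : is_equilibrium p F1 F2 (mkState Sb Vb Ib 0) ->
  Lam p - F1 Sb Ib - F2 Sb 0 - lam p * Sb = 0 /\ r p * Sb - (mu p + k p * 0) * Vb = 0 /\
  F1 Sb Ib - alpha1 p * Ib = 0 /\ F2 Sb 0 + k p * 0 * Vb - alpha2 p * 0 = 0.
Proof.
  intros H. unfold is_equilibrium, field in H. simpl in H.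
  injection H. intros. repeat split; assumption.
Qed.

Lemma sol_d4 p F1 F2 X : is_solution p F1 F2 X -> forall t, 0 < t ->
  is_derive (fun s => sI2 (X s)) t
    (F2 (sS (X t)) (sI2 (X t)) + k p * sI2 (X t) * sV (X t) - alpha2 p * sI2 (X t)).
Proof. intros [Hd _] t Ht. apply (Hd t Ht). Qed.

Theorem unstable_part p F1 f1 F2 f2 Sb Vb Ib :
  params_ok p -> incidence_hyp F1 f1 -> incidence_hyp F2 f2 ->
  0 < Sb -> 0 < Vb -> 0 < Ib ->
  is_equilibrium p F1 F2 (mkState Sb Vb Ib 0) ->
  Rbar2 p F2 Sb Vb > 1 -> unstable p F1 F2 (mkState Sb Vb Ib 0).
Proof.
  intros Hp H1 H2 HSb HVb HIb Heq HR Hst.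
  pose proof Hp as [HLam [Hmu [Hr [Hk [Hg1 [Hg2 [Hv1 Hv2]]]]]]].
  assert (Ha2 : 0 < alpha2 p) by (unfold alpha2; lra).
  set (beta := d2 F2 Sb 0).
  assert (Hbeta : beta = f2 Sb 0) by (apply beta_eq; [exact H2|lra]).
  set (sig := beta + k p * Vb - alpha2 p).
  assert (Hsig : 0 < sig).
  { unfold Rbar2 in HR. fold beta in HR.
    assert (beta + k p * Vb = alpha2 p * (/ alpha2 p * beta + k p * Vb / alpha2 p)) by (field; lra).
    unfold sig. assert (alpha2 p * 1 < alpha2 p * (/ alpha2 p * beta + k p * Vb / alpha2 p)) by (apply Rmult_lt_compat_l; lra).
    lra. }
  pose proof H2 as [HF2 [Hf2 [Hpos2 [HIf2 _]]]].
  destruct (cont_R2 f2 Sb 0 (C2_cont f2 Hf2 Sb 0) (sig / 4) ltac:(lra)) as [d1 [Hd1 Hc]].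
  set (rho := Rmin d1 (sig / (4 * k p))).
  assert (Hrho : 0 < rho /\ rho <= d1 /\ k p * rho <= sig / 4).
  { unfold rho. split. apply Rmin_pos. lra. apply Rdiv_lt_0_compat; lra. split. apply Rmin_l.
    apply Rle_trans with (k p * (sig / (4 * k p))). apply Rmult_le_compat_l. lra. apply Rmin_r.
    right. field. lra. }
  destruct (Hst rho (proj1 Hrho)) as [delta [Hdelta Hstab]].
  set (x0 := mkState Sb Vb Ib (delta / 2)).
  assert (Hx0 : nonneg_state x0) by (unfold x0, nonneg_state; simpl; repeat split; lra).
  destruct (exist_sol p F1 f1 F2 f2 Hp H1 H2 x0 Hx0) as [X [Hsol [HX0 Hnn]]].
  assert (Hd0 : dist4 (X 0) (mkState Sb Vb Ib 0) < delta).
  { apply Rle_lt_trans with (delta / 2); [|lra]. rewrite HX0. apply dist4_le.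
    intros [ | | | ]; simpl; rewrite ?Rminus_diag, ?Rabs_R0, ?Rminus_0_r; try lra.
    rewrite Rabs_right; lra. }
  pose proof (Hstab X Hsol (Hnn 0 (Rle_refl 0)) Hd0) as Hb.
  set (I2 := fun t => sI2 (X t)).
  set (dI2 := fun t => F2 (sS (X t)) (sI2 (X t)) + k p * sI2 (X t) * sV (X t) - alpha2 p * sI2 (X t)).
  assert (HI2d : forall t, 0 < t -> is_derive I2 t (dI2 t)) by (intros; apply (sol_d4 p F1 F2 X Hsol); assumption).
  assert (HI2c : filterlim I2 (at_right 0) (locally (I2 0))) by exact (proj2 (proj2 (proj2 (proj2 Hsol)))).
  assert (HI20 : I2 0 = delta / 2) by (unfold I2; rewrite HX0; reflexivity).
  assert (Hgrow : forall t, 0 < t -> I2 t * (sig / 2) <= dI2 t).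
  { intros t Ht. pose proof (Hb t (Rlt_le _ _ Ht)) as Hbt.
    pose proof (dist4_ge (X t) (mkState Sb Vb Ib 0) i0) as HS. pose proof (dist4_ge (X t) (mkState Sb Vb Ib 0) i1) as HV.
    pose proof (dist4_ge (X t) (mkState Sb Vb Ib 0) i3) as HJ. simpl in HS, HV, HJ.
    destruct (Hnn t (Rlt_le _ _ Ht)) as [Sn [Vn [In1 In2]]].
    unfold dI2, I2. rewrite HIf2 by assumption.
    assert (Hf : Rabs (f2 (sS (X t)) (sI2 (X t)) - f2 Sb 0) < sig / 4).
    { apply Hc. lra. lra. }
    apply Rabs_def2 in Hf. assert (HV' : Rabs (sV (X t) - Vb) < rho) by lra. apply Rabs_def2 in HV'.
    assert (k p * sV (X t) >= k p * Vb - sig / 4).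
    { assert (k p * (Vb - sV (X t)) <= k p * rho) by (apply Rmult_le_compat_l; lra). lra. }
    assert (sig / 2 <= f2 (sS (X t)) (sI2 (X t)) + k p * sV (X t) - alpha2 p) by (unfold sig in *; lra).
    replace (sI2 (X t) * f2 (sS (X t)) (sI2 (X t)) + k p * sI2 (X t) * sV (X t) - alpha2 p * sI2 (X t))
      with (sI2 (X t) * (f2 (sS (X t)) (sI2 (X t)) + k p * sV (X t) - alpha2 p)) by ring.
    apply Rmult_le_compat_l; assumption. }
  assert (Hge : forall t, 0 <= t -> delta / 2 <= I2 t).
  { intros t Ht.
    assert (-1 * I2 t <= - (delta / 2)).
    { apply (upper_barrier (fun t => -1 * I2 t) (fun t => -1 * dI2 t)).
      - intros u Hu. apply isd_scal, HI2d, Hu.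
      - apply (rc_mult (fun _ => -1) I2 0). apply rc_const. exact HI2c.
      - rewrite HI20. lra.
      - intros u Hu _. pose proof (Hgrow u Hu). pose proof (Hnn u (Rlt_le _ _ Hu)) as [_ [_ [_ HI]]].
        assert (0 <= I2 u * (sig / 2)) by (apply Rmult_le_pos; unfold I2; lra). lra.
      - exact Ht. }
    lra. }
  set (c1 := delta / 2 * (sig / 2)).
  assert (Hlin : forall t, 0 <= t -> delta / 2 + c1 * t - I2 t <= 0).
  { intros t Ht. apply (upper_barrier (fun t => delta / 2 + c1 * t - I2 t) (fun t => c1 - dI2 t)).
    - intros u Hu. apply (isd_ext (fun t => delta / 2 + c1 * t - I2 t) _ u (0 + c1 * 1 - dI2 u)).
      intros; reflexivity. match goal with |- ?a = ?b => change (@eq R a b) end; ring. apply isd_minus. apply isd_plus. apply isd_const. apply isd_scal. apply isd_id. apply HI2d, Hu.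
    - apply (rc_plus (fun t => delta / 2 + c1 * t) (fun t => - I2 t) 0). 
      apply (rc_cont (fun t => delta / 2 + c1 * t)). apply cont_plusR. apply continuous_const. apply cont_multR. apply continuous_const. apply continuous_id.
      replace (- I2 0) with (-1 * I2 0) by ring.
      apply (filterlim_ext (fun t => -1 * I2 t)). intros; ring.
      apply (rc_mult (fun _ => -1) I2 0). apply rc_const. exact HI2c.
    - rewrite HI20. lra.
    - intros u Hu _. pose proof (Hgrow u Hu). pose proof (Hge u (Rlt_le _ _ Hu)).
      assert (c1 <= I2 u * (sig / 2)) by (unfold c1; apply Rmult_le_compat_r; lra). lra.
    - exact Ht. }
  set (t1 := rho / c1 + 1).
  assert (Hc1 : 0 < c1) by (unfold c1; apply Rmult_lt_0_compat; lra).
  assert (Ht1 : 0 <= t1) by (unfold t1; pose proof (Rdiv_lt_0_compat rho c1 (proj1 Hrho) Hc1); lra).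
  pose proof (Hlin t1 Ht1).
  pose proof (Hb t1 Ht1) as Hbt. pose proof (dist4_ge (X t1) (mkState Sb Vb Ib 0) i3) as HJ. simpl in HJ.
  rewrite Rminus_0_r in HJ. assert (HJ2 : Rabs (sI2 (X t1)) < rho) by lra. apply Rabs_def2 in HJ2.
  assert (c1 * t1 = rho + c1) by (unfold t1; field; lra).
  unfold I2 in *. lra.
Qed.

Lemma dist4_attained x y : exists kk, dist4 x y = Rabs (cp kk x - cp kk y).
Proof.
  unfold dist4, Rmax. repeat destruct Rle_dec.
  all: first [exists i0; reflexivity | exists i1; reflexivity | exists i2; reflexivity | exists i3; reflexivity].
Qed.

Lemma sq_le_of_abs z nu : Rabs z <= nu -> z * z <= nu * nu.
Proof.
  intros H. pose proof (Rabs_pos z).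
  replace (z * z) with (Rabs z * Rabs z) by (rewrite <- Rabs_mult; apply Rabs_right; nra).
  apply Rmult_le_compat; lra.
Qed.

Section Stable.
Variables (p : params) (F1 f1 F2 f2 : R -> R -> R) (Sb Vb Ib : R).
Hypothesis Hp : params_ok p.
Hypothesis H1 : incidence_hyp F1 f1.
Hypothesis H2 : incidence_hyp F2 f2.
Hypothesis HSb : 0 < Sb.
Hypothesis HVb : 0 < Vb.
Hypothesis HIb : 0 < Ib.
Hypothesis Heq : is_equilibrium p F1 F2 (mkState Sb Vb Ib 0).
Hypothesis HR : Rbar2 p F2 Sb Vb < 1.

Let a := d1 F1 Sb Ib.
Let b := d2 F1 Sb Ib.
Let beta := d2 F2 Sb 0.
Let delta := alpha2 p - beta - k p * Vb.
Let E0 := mkState Sb Vb Ib 0.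

Lemma loc_pos (x : R) (P : R -> Prop) : 0 < x -> (forall u, 0 < u -> P u) -> locally x P.
Proof.
  intros Hx HP. exists (mkposreal x Hx). intros u Hu. change (Rabs (u - x) < x) in Hu.
  apply HP. apply Rabs_def2 in Hu. lra.
Qed.

Lemma a_pos : 0 < a.
Proof.
  destruct H1 as [HF [Hf [_ [HIf [_ [_ [Hd _]]]]]]].
  assert (Hder : is_derive (fun u => F1 u Ib) Sb (Ib * d1 f1 Sb Ib)).
  { apply (is_derive_ext_loc (fun u => Ib * f1 u Ib)).
    apply loc_pos. lra. intros u Hu. rewrite HIf by lra. reflexivity.
    apply isd_scal. apply C2_d1. exact Hf. }
  replace a with (Ib * d1 f1 Sb Ib) by (symmetry; unfold a, d1; apply is_derive_unique; exact Hder).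
  destruct (Hd Sb Ib ltac:(lra) ltac:(lra)) as [Hpos _]. apply Rmult_lt_0_compat; lra.
Qed.

Lemma equil : Lam p = F1 Sb Ib + F2 Sb 0 + lam p * Sb /\ r p * Sb = mu p * Vb /\
  F1 Sb Ib = alpha1 p * Ib /\ F2 Sb 0 = 0.
Proof.
  destruct (equil_facts p F1 F2 Sb Vb Ib Heq) as [e1 [e2 [e3 e4]]].
  split. lra. split. lra. split. lra. lra.
Qed.

Lemma b_le : b <= alpha1 p.
Proof.
  destruct H1 as [HF [Hf [_ [HIf [_ [_ [Hd _]]]]]]].
  assert (Hder : is_derive (fun v => F1 Sb v) Ib (1 * f1 Sb Ib + Ib * d2 f1 Sb Ib)).
  { apply (is_derive_ext_loc (fun v => v * f1 Sb v)).
    apply loc_pos. lra. intros u Hu. rewrite HIf by lra. reflexivity.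
    apply (isd_mult (fun v => v) (fun v => f1 Sb v)). apply isd_id. apply C2_d2. exact Hf. }
  replace b with (1 * f1 Sb Ib + Ib * d2 f1 Sb Ib) by (symmetry; unfold b, d2; apply is_derive_unique; exact Hder).
  destruct (Hd Sb Ib ltac:(lra) ltac:(lra)) as [_ Hneg].
  destruct equil as [_ [_ [E3 _]]]. rewrite HIf in E3 by lra.
  assert (f1 Sb Ib = alpha1 p) by (apply Rmult_eq_reg_l with Ib; lra).
  assert (0 <= Ib * (- d2 f1 Sb Ib)) by (apply Rmult_le_pos; lra).
  lra.
Qed.

Lemma d1F2_zero : d1 F2 Sb 0 = 0.
Proof.
  destruct H2 as [HF [Hf [_ [HIf [_ [HI0 _]]]]]].
  unfold d1. apply is_derive_unique.
  apply (is_derive_ext_loc (fun _ => 0)). apply loc_pos. lra. intros u Hu. rewrite HI0 by lra. reflexivity.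
  apply isd_const.
Qed.

Lemma delta_pos : 0 < delta.
Proof.
  pose proof Hp as [_ [Hmu [_ [Hk [_ [Hg2 [_ Hv2]]]]]]].
  assert (Ha2 : 0 < alpha2 p) by (unfold alpha2; lra).
  unfold Rbar2 in HR. fold beta in HR. unfold delta.
  assert (beta + k p * Vb = alpha2 p * (/ alpha2 p * beta + k p * Vb / alpha2 p)) by (field; lra).
  assert (alpha2 p * (/ alpha2 p * beta + k p * Vb / alpha2 p) < alpha2 p * 1) by (apply Rmult_lt_compat_l; lra).
  lra.
Qed.

Let la := lam p.
Let al1 := alpha1 p.
Lemma hla : 0 < la. Proof. pose proof Hp as [_ [Hmu [Hr _]]]. unfold la, lam. lra. Qed.
Lemma hal : 0 < al1. Proof. pose proof Hp as [_ [Hmu [_ [_ [Hg1 [_ [Hv1 _]]]]]]]. unfold al1, alpha1. lra. Qed.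
Lemma hmu : 0 < mu p. Proof. apply Hp. Qed.
Lemma hr : 0 < r p. Proof. apply Hp. Qed.
Lemma hk : 0 < k p. Proof. apply Hp. Qed.

Let LLf := Lf a b la al1 beta (mu p) (r p) (k p) Vb delta.
Let dL := dLf a b la al1 beta (mu p) (r p) (k p) Vb delta.
Let kp := kap a b la al1 (mu p) (r p).
Let c1 := C1 a b la al1 beta (mu p) (r p) (k p) Vb delta.
Let c2 := C2 a b la al1 beta (mu p) (r p) (k p) Vb delta.

Definition Sig2 (x : state) := (sS x - Sb) * (sS x - Sb) + (sI1 x - Ib) * (sI1 x - Ib) + (sV x - Vb) * (sV x - Vb) + sI2 x * sI2 x.

Definition Dt (x : state) := dL (sS x - Sb) (sI1 x - Ib) (sV x - Vb) (sI2 x)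
  (sS (field p F1 F2 x)) (sI1 (field p F1 F2 x)) (sV (field p F1 F2 x)) (sI2 (field p F1 F2 x)).

Lemma nu_le_Sig x : dist4 x E0 * dist4 x E0 <= Sig2 x.
Proof.
  destruct (dist4_attained x E0) as [kk Hkk]. rewrite Hkk. unfold Sig2, E0.
  assert (Hsq : forall z, Rabs z * Rabs z = z * z) by (intros z; rewrite <- Rabs_mult; apply Rabs_right; nra).
  rewrite Hsq. pose proof (Rle_0_sqr (sS x - Sb)). pose proof (Rle_0_sqr (sI1 x - Ib)).
  pose proof (Rle_0_sqr (sV x - Vb)). pose proof (Rle_0_sqr (sI2 x)). unfold Rsqr in *.
  destruct kk; simpl; rewrite ?Rminus_0_r; lra.
Qed.

Lemma Sig_le_nu x : Sig2 x <= 4 * (dist4 x E0 * dist4 x E0).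
Proof.
  unfold Sig2.
  pose proof (sq_le_of_abs _ _ (dist4_ge x E0 i0)). pose proof (sq_le_of_abs _ _ (dist4_ge x E0 i1)).
  pose proof (sq_le_of_abs _ _ (dist4_ge x E0 i2)). pose proof (sq_le_of_abs _ _ (dist4_ge x E0 i3)).
  unfold E0 in *; simpl in *. rewrite Rminus_0_r in *. lra.
Qed.

Lemma dissip : exists rho0, 0 < rho0 /\ forall x, dist4 x E0 < rho0 -> Dt x <= - (kp / 2) * Sig2 x.
Proof.
  pose proof a_pos as ha. pose proof b_le as hb. pose proof delta_pos as hd.
  pose proof hla as hla'. pose proof hal as hal'. pose proof hmu as hmu'. pose proof hr as hr'. pose proof hk as hk'.
  assert (Hkp : 0 < kp) by (apply kap_pos; assumption).
  set (eps0 := kp / (4 * (Rabs c1 + 1))).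
  assert (He0 : 0 < eps0) by (unfold eps0; apply Rdiv_lt_0_compat; [lra|pose proof (Rabs_pos c1); lra]).
  destruct (lin2 F1 (proj1 H1) Sb Ib eps0 He0) as [r1 [Hr1 HL1]].
  destruct (lin2 F2 (proj1 H2) Sb 0 eps0 He0) as [r2 [Hr2 HL2]].
  set (r3 := kp / (4 * (Rabs c2 + 1))).
  assert (Hr3 : 0 < r3) by (unfold r3; apply Rdiv_lt_0_compat; [lra|pose proof (Rabs_pos c2); lra]).
  exists (Rmin (Rmin r1 r2) r3). split. repeat apply Rmin_pos; assumption.
  intros x Hx. set (nu := dist4 x E0) in *.
  assert (Hx1 : nu < r1) by (eapply Rlt_le_trans; [exact Hx|]; eapply Rle_trans; [apply Rmin_l|apply Rmin_l]).
  assert (Hx2 : nu < r2) by (eapply Rlt_le_trans; [exact Hx|]; eapply Rle_trans; [apply Rmin_l|apply Rmin_r]).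
  assert (Hx3 : nu < r3) by (eapply Rlt_le_trans; [exact Hx|]; apply Rmin_r).
  assert (Hs : Rabs (sS x - Sb) <= nu) by exact (dist4_ge x E0 i0).
  assert (Hv : Rabs (sV x - Vb) <= nu) by exact (dist4_ge x E0 i1).
  assert (Hi : Rabs (sI1 x - Ib) <= nu) by exact (dist4_ge x E0 i2).
  assert (Hj : Rabs (sI2 x) <= nu) by (pose proof (dist4_ge x E0 i3) as H; simpl in H; rewrite Rminus_0_r in H; exact H).
  set (s := sS x - Sb) in *. set (i := sI1 x - Ib) in *. set (v := sV x - Vb) in *. set (j := sI2 x) in *.
  set (e1 := F1 (sS x) (sI1 x) - F1 Sb Ib - a * s - b * i).
  set (e2 := F2 (sS x) (sI2 x) - F2 Sb 0 - d1 F2 Sb 0 * s - beta * j).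
  assert (He1 : Rabs e1 <= 2 * eps0 * nu).
  { eapply Rle_trans. apply HL1.
    - change (Rabs s < r1). lra.
    - change (Rabs i < r1). lra.
    - change (eps0 * (Rabs s + Rabs i) <= 2 * eps0 * nu).
      assert (eps0 * (Rabs s + Rabs i) <= eps0 * (2 * nu)) by (apply Rmult_le_compat_l; lra). lra. }
  assert (He2 : Rabs e2 <= 2 * eps0 * nu).
  { pose proof (HL2 (sS x) (sI2 x)) as H'. rewrite !Rminus_0_r in H'.
    change (Rabs (F2 (sS x) (sI2 x) - F2 Sb 0 - d1 F2 Sb 0 * s - beta * j) <= 2 * eps0 * nu).
    eapply Rle_trans. apply H'.
    - change (Rabs s < r2). lra.
    - change (Rabs j < r2). lra.
    - change (eps0 * (Rabs s + Rabs j) <= 2 * eps0 * nu).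
      assert (eps0 * (Rabs s + Rabs j) <= eps0 * (2 * nu)) by (apply Rmult_le_compat_l; lra). lra. }
  destruct equil as [eL [eR [eF1 eF2]]].
  assert (EqS : sS (field p F1 F2 x) = - pp a la * s - b * i - beta * j - e1 - e2).
  { unfold field; simpl. unfold e1, e2, s, i, j, pp, la. rewrite d1F2_zero, eL. ring. }
  assert (EqI : sI1 (field p F1 F2 x) = a * s - q b al1 * i + e1).
  { unfold field; simpl. unfold e1, s, i, q, al1. rewrite eF1. ring. }
  assert (EqV : sV (field p F1 F2 x) = r p * s - mu p * v - k p * Vb * j - k p * j * v).
  { unfold field; simpl. unfold s, v, j. lra. }
  assert (EqJ : sI2 (field p F1 F2 x) = - delta * j + e2 + k p * j * v).
  { unfold field; simpl. unfold e2, s, v, j, delta. rewrite d1F2_zero, eF2. ring. }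
  unfold Dt. fold s i v j. rewrite EqS, EqI, EqV, EqJ. unfold dL. rewrite full_split.
  pose proof (lin_bound a b la al1 beta (mu p) (r p) (k p) Vb delta ha hla' hb hal' hmu' hr' hd s i v j) as HLin.
  pose proof (NL_bound a b la al1 beta (mu p) (r p) (k p) Vb delta ha hla' hb hal' hmu' hr' hk' hd s i v j e1 e2 nu eps0
      (Rlt_le _ _ He0) Hs Hi Hv Hj He1 He2) as HNL.
  fold kp in HLin. fold c1 c2 in HNL.
  assert (Hnu0 : 0 <= nu) by apply dist4_nonneg.
  assert (Hc1 : eps0 * c1 <= kp / 4).
  { apply Rle_trans with (eps0 * (Rabs c1 + 1)). apply Rmult_le_compat_l. lra. pose proof (Rle_abs c1). lra.
    unfold eps0. right. field. pose proof (Rabs_pos c1). lra. }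
  assert (Hc2 : nu * c2 <= kp / 4).
  { apply Rle_trans with (nu * (Rabs c2 + 1)). apply Rmult_le_compat_l. lra. pose proof (Rle_abs c2). lra.
    apply Rle_trans with (r3 * (Rabs c2 + 1)). apply Rmult_le_compat_r. pose proof (Rabs_pos c2). lra. lra.
    unfold r3. right. field. pose proof (Rabs_pos c2). lra. }
  assert (HS : nu * nu <= Sig2 x) by apply nu_le_Sig.
  assert (Hsig : Sig2 x = s * s + i * i + v * v + j * j) by (unfold Sig2; fold s i v j; reflexivity).
  assert (nu * nu * (eps0 * c1 + nu * c2) <= nu * nu * (kp / 2)).
  { apply Rmult_le_compat_l. nra. lra. }
  assert (nu * nu * (kp / 2) <= Sig2 x * (kp / 2)) by (apply Rmult_le_compat_r; lra).
  rewrite Hsig in *. lra.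
Qed.

Let Lmn := Lmin a b la al1 beta (mu p) (r p) (k p) Vb delta.
Let Lmx := Lmax a b la al1 beta (mu p) (r p) (k p) Vb delta.

Definition yL (X : R -> state) (t : R) := LLf (sS (X t) - Sb) (sI1 (X t) - Ib) (sV (X t) - Vb) (sI2 (X t)).

Lemma comp_deriv (h : R -> R) c t l : is_derive h t l -> is_derive (fun u => h u - c) t l.
Proof.
  intros H. apply (isd_ext (fun u => h u - c) _ t (l - 0)). intros; reflexivity.
  match goal with |- ?x = ?y => change (@eq R x y) end. ring.
  apply isd_minus. exact H. apply isd_const.
Qed.

Lemma yL_deriv X : is_solution p F1 F2 X -> forall t, 0 < t -> is_derive (yL X) t (Dt (X t)).
Proof.
  intros [Hd _] t Ht. destruct (Hd t Ht) as [dS [dV [dI dJ]]].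
  unfold yL, Dt, LLf, dL.
  apply (Lf_deriv a b la al1 beta (mu p) (r p) (k p) Vb delta
    (fun u => sS (X u) - Sb) (fun u => sI1 (X u) - Ib) (fun u => sV (X u) - Vb) (fun u => sI2 (X u))).
  apply comp_deriv; exact dS. apply comp_deriv; exact dI. apply comp_deriv; exact dV. exact dJ.
Qed.

Lemma yL_rc X : is_solution p F1 F2 X -> filterlim (yL X) (at_right 0) (locally (yL X 0)).
Proof.
  intros [_ [cS [cV [cI cJ]]]]. unfold yL, LLf.
  apply (Lf_rc a b la al1 beta (mu p) (r p) (k p) Vb delta
    (fun u => sS (X u) - Sb) (fun u => sI1 (X u) - Ib) (fun u => sV (X u) - Vb) (fun u => sI2 (X u))).
  apply (rc_minus (fun u => sS (X u)) (fun _ => Sb)). exact cS. apply rc_const.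
  apply (rc_minus (fun u => sI1 (X u)) (fun _ => Ib)). exact cI. apply rc_const.
  apply (rc_minus (fun u => sV (X u)) (fun _ => Vb)). exact cV. apply rc_const.
  exact cJ.
Qed.

Lemma yL_low X t : Lmn * Sig2 (X t) <= yL X t.
Proof.
  apply (Lf_lower a b la al1 beta (mu p) (r p) (k p) Vb delta a_pos hla b_le hal hmu hr delta_pos).
Qed.
Lemma yL_up X t : yL X t <= Lmx * Sig2 (X t).
Proof.
  apply (Lf_upper a b la al1 beta (mu p) (r p) (k p) Vb delta a_pos hla b_le hal hmu hr delta_pos).
Qed.
Lemma Lmn_pos : 0 < Lmn.
Proof. apply (Lmin_pos a b la al1 beta (mu p) (r p) (k p) Vb delta a_pos hla b_le hal hmu hr delta_pos). Qed.
Lemma Lmx_pos : 0 < Lmx.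
Proof. apply (Lmax_pos a b la al1 beta (mu p) (r p) (k p) Vb delta a_pos hla b_le hal hmu hr delta_pos). Qed.
Lemma kp_pos : 0 < kp.
Proof. apply (kap_pos a b la al1 (mu p) (r p) a_pos hla b_le hal hmu hr). Qed.

Lemma Sig2_nonneg x : 0 <= Sig2 x.
Proof. unfold Sig2. pose proof (Rle_0_sqr (sS x - Sb)). pose proof (Rle_0_sqr (sI1 x - Ib)).
  pose proof (Rle_0_sqr (sV x - Vb)). pose proof (Rle_0_sqr (sI2 x)). unfold Rsqr in *. lra. Qed.

Lemma sq_lt_inv nu rho : 0 <= nu -> 0 < rho -> nu * nu < rho * rho -> nu < rho.
Proof. intros. destruct (Rlt_or_le nu rho). assumption. nra. Qed.

Lemma stay rho0 : (forall x, dist4 x E0 < rho0 -> Dt x <= - (kp / 2) * Sig2 x) ->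
  forall rho, 0 < rho <= rho0 -> exists dl, 0 < dl /\ forall X, is_solution p F1 F2 X ->
  dist4 (X 0) E0 < dl -> forall t, 0 <= t -> yL X t <= yL X 0 /\ dist4 (X t) E0 < rho.
Proof.
  intros Hdis rho Hrho. pose proof Lmn_pos. pose proof Lmx_pos. pose proof kp_pos.
  set (cd := Rmin 1 (Lmn / (8 * Lmx))).
  assert (Hcd : 0 < cd /\ cd <= 1 /\ cd <= Lmn / (8 * Lmx)).
  { unfold cd. split. apply Rmin_pos. lra. apply Rdiv_lt_0_compat; lra. split. apply Rmin_l. apply Rmin_r. }
  exists (rho * cd). split. apply Rmult_lt_0_compat; lra.
  intros X Hsol HX0.
  set (d := Lmn * (rho * rho)).
  assert (Hsmall : forall t, yL X t < d -> dist4 (X t) E0 < rho).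
  { intros t Ht. pose proof (yL_low X t). pose proof (nu_le_Sig (X t)).
    apply sq_lt_inv. apply dist4_nonneg. lra.
    assert (Lmn * (dist4 (X t) E0 * dist4 (X t) E0) <= Lmn * Sig2 (X t)) by (apply Rmult_le_compat_l; lra).
    apply Rmult_lt_reg_l with Lmn. lra. unfold d in Ht. lra. }
  assert (Hy0 : yL X 0 < d).
  { pose proof (yL_up X 0). pose proof (Sig_le_nu (X 0)).
    set (nu := dist4 (X 0) E0) in *. assert (0 <= nu) by apply dist4_nonneg.
    assert (nu * nu <= (rho * cd) * (rho * cd)) by (apply Rmult_le_compat; lra).
    assert ((rho * cd) * (rho * cd) <= rho * rho * (Lmn / (8 * Lmx))).
    { replace ((rho * cd) * (rho * cd)) with (rho * rho * (cd * cd)) by ring.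
      apply Rmult_le_compat_l. nra. apply Rle_trans with (cd * 1). apply Rmult_le_compat_l; lra. lra. }
    assert (Lmx * Sig2 (X 0) <= Lmx * (4 * (nu * nu))) by (apply Rmult_le_compat_l; lra).
    assert (Lmx * (4 * (nu * nu)) <= Lmx * (4 * (rho * rho * (Lmn / (8 * Lmx))))) by (apply Rmult_le_compat_l; lra).
    assert (Lmx * (4 * (rho * rho * (Lmn / (8 * Lmx)))) = d / 2) by (unfold d; field; lra).
    assert (0 < d) by (unfold d; apply Rmult_lt_0_compat; nra).
    lra. }
  assert (Hfe : forall t, 0 <= t -> yL X t <= yL X 0).
  { apply (first_exit (yL X) (fun t => Dt (X t)) (yL_deriv X Hsol) (yL_rc X Hsol) d Hy0).
    intros t Ht Hy. pose proof (Hsmall t Hy). pose proof (Hdis (X t) ltac:(lra)).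
      pose proof (Sig2_nonneg (X t)). nra. }
  intros t Ht. split. apply Hfe; exact Ht. apply Hsmall. pose proof (Hfe t Ht). lra.
Qed.

Theorem stable_main : loc_asymp_stable p F1 F2 E0.
Proof.
  destruct dissip as [rho0 [Hrho0 Hdis]].
  pose proof Lmn_pos. pose proof Lmx_pos. pose proof kp_pos.
  split.
  - intros eps Heps. destruct (stay rho0 Hdis (Rmin rho0 eps)) as [dl [Hdl Hst]].
    split. apply Rmin_pos; lra. apply Rmin_l.
    exists dl. split. exact Hdl. intros X Hsol _ HX0 t Ht.
    destruct (Hst X Hsol HX0 t Ht) as [_ H']. eapply Rlt_le_trans. exact H'. apply Rmin_r.
  - destruct (stay rho0 Hdis rho0) as [dl [Hdl Hst]]. lra.
    exists dl. split. exact Hdl. intros X Hsol _ HX0.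
    set (kq := kp / (2 * Lmx)).
    assert (Hkq : 0 < kq) by (unfold kq; apply Rdiv_lt_0_compat; lra).
    assert (Hdec : forall t, 0 < t -> Dt (X t) <= - kq * yL X t).
    { intros t Ht. destruct (Hst X Hsol HX0 t (Rlt_le _ _ Ht)) as [_ Hn].
      pose proof (Hdis (X t) Hn). pose proof (yL_up X t).
      assert (kq * yL X t <= kq * (Lmx * Sig2 (X t))) by (apply Rmult_le_compat_l; lra).
      assert (kq * (Lmx * Sig2 (X t)) = kp / 2 * Sig2 (X t)) by (unfold kq; field; lra).
      lra. }
    assert (Hexp : forall t, 0 <= t -> yL X t * exp (kq * t) <= yL X 0).
    { intros t Ht.
      assert (E : yL X 0 = yL X 0 * exp (kq * 0)) by (rewrite Rmult_0_r, exp_0; ring).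
      apply (upper_barrier (fun t => yL X t * exp (kq * t))
        (fun t => Dt (X t) * exp (kq * t) + yL X t * (kq * exp (kq * t)))).
      - intros u Hu. apply (isd_mult (yL X) (fun t => exp (kq * t))). apply yL_deriv; assumption.
        auto_derive. auto. ring.
      - apply (rc_mult (yL X) (fun t => exp (kq * t))). apply yL_rc; exact Hsol.
        apply (rc_cont (fun t => exp (kq * t))).
        apply (ex_derive_continuous (K:=R_AbsRing) (V:=R_NormedModule)). auto_derive. auto.
      - rewrite Rmult_0_r, exp_0. lra.
      - intros u Hu _. pose proof (Hdec u Hu). pose proof (exp_pos (kq * u)).
        assert (0 <= - (Dt (X u) + kq * yL X u) * exp (kq * u)) by (apply Rmult_le_pos; lra).
        lra.
      - exact Ht. }
    apply is_lim_spec. intros [e He]. simpl.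
    set (A := yL X 0 / Lmn).
    assert (HA : 0 <= A).
    { unfold A. apply Rdiv_le_0_compat; [|lra]. pose proof (yL_low X 0). pose proof (Sig2_nonneg (X 0)).
      assert (0 <= Lmn * Sig2 (X 0)) by (apply Rmult_le_pos; lra). lra. }
    exists (Rmax 0 (ln ((A + 1) / (e * e)) / kq)).
    intros t Ht.
    assert (Ht0 : 0 < t) by (eapply Rle_lt_trans; [apply Rmax_l|exact Ht]).
    assert (Hee : 0 < e * e) by nra.
    assert (HAe : 0 < (A + 1) / (e * e)) by (apply Rdiv_lt_0_compat; lra).
    assert (Hexp' : (A + 1) / (e * e) < exp (kq * t)).
    { rewrite <- (exp_ln ((A + 1) / (e * e))) at 1 by exact HAe. apply exp_increasing.
      assert (Hlt : ln ((A + 1) / (e * e)) / kq < t) by (eapply Rle_lt_trans; [apply Rmax_r|exact Ht]).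
      apply Rmult_lt_compat_l with (r := kq) in Hlt; [|exact Hkq].
      replace (kq * (ln ((A + 1) / (e * e)) / kq)) with (ln ((A + 1) / (e * e))) in Hlt by (field; lra).
      exact Hlt. }
    set (nu := dist4 (X t) E0).
    assert (Hnu : 0 <= nu) by apply dist4_nonneg.
    pose proof (exp_pos (kq * t)) as Hep.
    assert (Hkey : nu * nu * exp (kq * t) <= A).
    { pose proof (yL_low X t) as Hl1. pose proof (nu_le_Sig (X t)) as Hl2. pose proof (Hexp t (Rlt_le _ _ Ht0)) as Hl3.
      fold nu in Hl2.
      assert (Lmn * (nu * nu) <= yL X t) by (eapply Rle_trans; [apply Rmult_le_compat_l; [lra|exact Hl2]|exact Hl1]).
      assert (Lmn * (nu * nu) * exp (kq * t) <= yL X t * exp (kq * t)) by (apply Rmult_le_compat_r; lra).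
      unfold A. apply Rmult_le_reg_l with Lmn. lra.
      replace (Lmn * (yL X 0 / Lmn)) with (yL X 0) by (field; lra). lra. }
    assert (Hk2 : nu * nu * ((A + 1) / (e * e)) <= A).
    { eapply Rle_trans; [|exact Hkey]. apply Rmult_le_compat_l. nra. lra. }
    assert (Hk3 : nu * nu * (A + 1) <= A * (e * e)).
    { apply Rmult_le_compat_r with (r := e * e) in Hk2; [|lra].
      replace (nu * nu * ((A + 1) / (e * e)) * (e * e)) with (nu * nu * (A + 1)) in Hk2 by (field; lra). exact Hk2. }
    rewrite Rminus_0_r, Rabs_right by lra.
    apply sq_lt_inv. exact Hnu. exact He. nra.
Qed.
End Stable.


Theorem mainTheorem7 (p : params) (F1 f1 F2 f2 : R -> R -> R)
    (Sb Vb Ib : R) :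
  params_ok p ->
  incidence_hyp F1 f1 -> incidence_hyp F2 f2 ->
  0 < Sb -> 0 < Vb -> 0 < Ib ->
  is_equilibrium p F1 F2 (mkState Sb Vb Ib 0) ->
  (Rbar2 p F2 Sb Vb > 1 -> unstable p F1 F2 (mkState Sb Vb Ib 0)) /\
  (Rbar2 p F2 Sb Vb < 1 -> loc_asymp_stable p F1 F2 (mkState Sb Vb Ib 0)).
Proof.
  intros Hp H1 H2 HSb HVb HIb Heq. split.
  - intros HR. exact (unstable_part p F1 f1 F2 f2 Sb Vb Ib Hp H1 H2 HSb HVb HIb Heq HR).
  - intros HR. exact (stable_main p F1 f1 F2 f2 Sb Vb Ib Hp H1 H2 HSb HIb Heq HR).
Qed.
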